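(* Let $a<b$ and let $X=(X_1,\dots,X_n)$ have coordinates taking values in finite subsets of $[a,b]$ and satisfy a $\mathfrak{d}$-LSI$(\sigma^2)$. Let $(\mathcal{B},\|\cdot\|)$ be a Banach space with dual unit ball $\mathcal{B}_1^*$, $\mathcal{T}$ a compact set of families $t=(t_{ij})_{1\le i<j\le n}$ in $\mathcal{B}$ (extended by $t_{ji}=t_{ij}$, $t_{ii}=0$), and $f_{\mathcal{T}}(X)=\sup_{t\in\mathcal{T}}\|\sum_{i<j}X_iX_jt_{ij}\|$. Put $T_1=\mathbb{E}\sup_{t\in\mathcal{T}}\sup_{v^*\in\mathcal{B}_1^*}\big(\sum_{i=1}^n(\sum_{j=1}^nX_jv^*(t_{ij}))^2\big)^{1/2}$ and $T_2=\sup_{t\in\mathcal{T}}\sup_{v^*\in\mathcal{B}_1^*}|(v^*(t_{ij}))_{i,j}|_{\mathrm{op}}$. Then for all $t\ge0$, \[ \mathbb{P}\big(f_{\mathcal{T}}(X)-\mathbb{E}f_{\mathcal{T}}(X)\ge t\big)\le2\exp\Big(-\frac{1}{60(b-a)^2\sigma^2}\min\Big(\frac{t^2}{T_1^2},\frac{t}{T_2}\Big)\Big). \]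
   Context: $\mathfrak{d}$-LSI$(\sigma^2)$: with $\mu$ the law of $X$, $\mathfrak{d}_iF(x)^2=\mathrm{Var}_{\mu(\cdot\mid x_{i^c})}(F(x_{i^c},\cdot))$ (variance under the conditional law of $X_i$ given the other coordinates), $|\mathfrak{d}F|^2=\sum_i\mathfrak{d}_iF^2$, and $\mathrm{Ent}_\mu(F^2)\le2\sigma^2\int|\mathfrak{d}F|^2d\mu$ for all $F$, where $\mathrm{Ent}_\mu(h)=\int h\log h\,d\mu-\int h\,d\mu\log\int h\,d\mu$. $|M|_{\mathrm{op}}$ is the operator norm of a real matrix. *)

(* Defs.v *)
From Stdlib Require Import Reals Lra List Classical ClassicalEpsilon.
Import ListNotations.
Open Scope R_scope.

Definition fsum (n : nat) (f : nat -> R) : R :=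
  fold_right Rplus 0 (map f (seq 0 n)).

(* least upper bound of E when it exists (unique), 0 otherwise *)
Definition Rsup (E : R -> Prop) : R :=
  match excluded_middle_informative (exists l, is_lub E l) with
  | left h => proj1_sig (constructive_indefinite_description _ h)
  | right _ => 0
  end.

(* A law on R^n with finite support, given as a list of atoms (point, mass).
   Points are maps nat -> R; only coordinates 0..n-1 are meaningful. *)
Definition law := list ((nat -> R) * R).

Definition is_prob (mu : law) : Prop :=
  (forall xp, In xp mu -> 0 <= snd xp) /\
  fold_right Rplus 0 (map snd mu) = 1.

Definition Ex (mu : law) (F : (nat -> R) -> R) : R :=
  fold_right Rplus 0 (map (fun xp => snd xp * F (fst xp)) mu).

Definition Pr (mu : law) (P : (nat -> R) -> Prop) : R :=
  fold_right Rplus 0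
    (map (fun xp => if excluded_middle_informative (P (fst xp)) then snd xp else 0) mu).

(* truncation of a point to its first n coordinates (so functions of it are functions on R^n) *)
Definition trunc (n : nat) (x : nat -> R) : nat -> R :=
  fun k => if Nat.ltb k n then x k else 0.

Definition upd (x : nat -> R) (i : nat) (r : R) : nat -> R :=
  fun k => if Nat.eqb k i then r else x k.

Definition agree_off (n i : nat) (x y : nat -> R) : bool :=
  forallb (fun j => orb (Nat.eqb j i)
                    (if Req_EM_T (x j) (y j) then true else false)) (seq 0 n).

(* conditional law of X_i given X_{i^c} = x_{i^c}: atoms agreeing with x off i *)
Definition cond_atoms (mu : law) (n i : nat) (x : nat -> R) : law :=
  filter (fun yp => agree_off n i x (fst yp)) mu.

(* (frak d_i F)(x)^2 = Var_{mu(.|x_{i^c})} (F(x_{i^c}, .)) *)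
Definition dsq (mu : law) (n i : nat) (F : (nat -> R) -> R) (x : nat -> R) : R :=
  let c := cond_atoms mu n i x in
  let m := fold_right Rplus 0 (map snd c) in
  let G := fun y : nat -> R => F (trunc n (upd x i (y i))) in
  Ex c (fun y => (G y)^2) / m - (Ex c G / m)^2.

Definition dnorm2 (mu : law) (n : nat) (F : (nat -> R) -> R) (x : nat -> R) : R :=
  fsum n (fun i => dsq mu n i F x).

Definition Ent (mu : law) (h : (nat -> R) -> R) : R :=
  Ex mu (fun x => h x * ln (h x)) - Ex mu h * ln (Ex mu h).

Definition dLSI (mu : law) (n : nat) (sigma2 : R) : Prop :=
  forall F : (nat -> R) -> R,
    Ent mu (fun x => (F (trunc n x))^2)
      <= 2 * sigma2 * Ex mu (dnorm2 mu n (fun x => F (trunc n x))).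

Record Banach := {
  car :> Type;
  vzero : car;
  vadd : car -> car -> car;
  vopp : car -> car;
  vscal : R -> car -> car;
  vnorm : car -> R;
  vadd_assoc : forall x y z, vadd x (vadd y z) = vadd (vadd x y) z;
  vadd_comm : forall x y, vadd x y = vadd y x;
  vadd_0 : forall x, vadd vzero x = x;
  vadd_opp : forall x, vadd x (vopp x) = vzero;
  vscal_1 : forall x, vscal 1 x = x;
  vscal_assoc : forall a b x, vscal a (vscal b x) = vscal (a * b) x;
  vscal_distr_v : forall a x y, vscal a (vadd x y) = vadd (vscal a x) (vscal a y);
  vscal_distr_s : forall a b x, vscal (a + b) x = vadd (vscal a x) (vscal b x);
  vnorm_eq0 : forall x, vnorm x = 0 -> x = vzero;
  vnorm_scal : forall a x, vnorm (vscal a x) = Rabs a * vnorm x;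
  vnorm_triang : forall x y, vnorm (vadd x y) <= vnorm x + vnorm y;
  complete : forall u : nat -> car,
    (forall eps, 0 < eps -> exists N, forall p q, (N <= p)%nat -> (N <= q)%nat ->
        vnorm (vadd (u p) (vopp (u q))) < eps) ->
    exists l, forall eps, 0 < eps -> exists N, forall p, (N <= p)%nat ->
        vnorm (vadd (u p) (vopp l)) < eps
}.

Arguments vzero {_}. Arguments vadd {_}. Arguments vopp {_}.
Arguments vscal {_}. Arguments vnorm {_}.

Definition vsum {V : Banach} (n : nat) (f : nat -> V) : V :=
  fold_right vadd vzero (map f (seq 0 n)).

Definition dual_ball {V : Banach} (phi : V -> R) : Prop :=
  (forall x y, phi (vadd x y) = phi x + phi y) /\
  (forall a x, phi (vscal a x) = a * phi x) /\
  (forall x, Rabs (phi x) <= vnorm x).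

(* families t = (t_ij)_{1<=i<j<=n}, stored as t i j for i < j < n (0-indexed);
   symmetric extension t_ji = t_ij, t_ii = 0 *)
Definition bfamily (V : Banach) := nat -> nat -> V.

Definition text {V : Banach} (t : bfamily V) (i j : nat) : V :=
  if Nat.ltb i j then t i j else if Nat.ltb j i then t j i else vzero.

Definition fdist {V : Banach} (n : nat) (t s : bfamily V) : R :=
  fold_right Rmax 0
    (flat_map (fun i => map (fun j => vnorm (vadd (t i j) (vopp (s i j))))
                            (seq (S i) (n - S i))) (seq 0 n)).

Definition fopen {V : Banach} (n : nat) (U : bfamily V -> Prop) : Prop :=
  forall t, U t -> exists eps, 0 < eps /\ forall s, fdist n t s < eps -> U s.

Definition fcompact {V : Banach} (n : nat) (T : bfamily V -> Prop) : Prop :=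
  forall (I : Type) (U : I -> bfamily V -> Prop),
    (forall k, fopen n (U k)) ->
    (forall t, T t -> exists k, U k t) ->
    exists l : list I, forall t, T t -> exists k, In k l /\ U k t.

Definition fT {V : Banach} (n : nat) (T : bfamily V -> Prop) (x : nat -> R) : R :=
  Rsup (fun r => exists t, T t /\
          r = vnorm (vsum n (fun i => vsum n (fun j =>
                 if Nat.ltb i j then vscal (x i * x j) (t i j) else vzero)))).

Definition opnorm (n : nat) (M : nat -> nat -> R) : R :=
  Rsup (fun r => exists u : nat -> R, fsum n (fun j => (u j)^2) <= 1 /\
          r = sqrt (fsum n (fun i => (fsum n (fun j => M i j * u j))^2))).

Definition T1 {V : Banach} (mu : law) (n : nat) (T : bfamily V -> Prop) : R :=
  Ex mu (fun x => Rsup (fun r => exists t phi, T t /\ dual_ball phi /\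
          r = sqrt (fsum n (fun i => (fsum n (fun j => x j * phi (text t i j)))^2)))).

Definition T2 {V : Banach} (n : nat) (T : bfamily V -> Prop) : R :=
  Rsup (fun r => exists t phi, T t /\ dual_ball phi /\
          r = opnorm n (fun i j => phi (text t i j))).

(* Main.v *)
Require Import Defs.
From Stdlib Require Import Reals List.
From Stdlib Require Import Lra Lia Classical ClassicalEpsilon FunctionalExtensionality PropExtensionality ZArith.
Import ListNotations.
Open Scope R_scope.

Definition lsum {A : Type} (l : list A) (F : A -> R) : R := fold_right Rplus 0 (map F l).

Lemma lsum_nil {A} (F : A -> R) : lsum [] F = 0.
Proof. reflexivity. Qed.
Lemma lsum_cons {A} (a : A) l F : lsum (a :: l) F = F a + lsum l F.
Proof. reflexivity. Qed.
Lemma lsum_app {A} (l1 l2 : list A) F : lsum (l1 ++ l2) F = lsum l1 F + lsum l2 F.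
Proof. unfold lsum. rewrite map_app, fold_right_app. induction l1; simpl; [lra|]. rewrite IHl1.
  lra. Qed.
Lemma lsum_ext {A} (l : list A) F G : (forall a, In a l -> F a = G a) -> lsum l F = lsum l G.
Proof. induction l; intros H; [reflexivity|]. rewrite !lsum_cons, H, IHl; auto. intros; apply H; simpl; auto. simpl; auto. Qed.
Lemma lsum_plus {A} (l : list A) F G : lsum l (fun a => F a + G a) = lsum l F + lsum l G.
Proof. induction l; [unfold lsum; simpl; lra|]. rewrite !lsum_cons, IHl; lra. Qed.
Lemma lsum_scal {A} (l : list A) c F : lsum l (fun a => c * F a) = c * lsum l F.
Proof. induction l; [unfold lsum; simpl; lra|]. rewrite !lsum_cons, IHl; lra. Qed.
Lemma lsum_scal_r {A} (l : list A) c F : lsum l (fun a => F a * c) = lsum l F * c.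
Proof. induction l; [unfold lsum; simpl; lra|]. rewrite !lsum_cons, IHl; lra. Qed.
Lemma lsum_minus {A} (l : list A) F G : lsum l (fun a => F a - G a) = lsum l F - lsum l G.
Proof. induction l; [unfold lsum; simpl; lra|]. rewrite !lsum_cons, IHl; lra. Qed.
Lemma lsum_zero {A} (l : list A) : lsum l (fun _ => 0) = 0.
Proof. induction l; [reflexivity|]. rewrite lsum_cons, IHl; lra. Qed.
Lemma lsum_le {A} (l : list A) F G : (forall a, In a l -> F a <= G a) -> lsum l F <= lsum l G.
Proof. induction l; intros H; [unfold lsum; simpl; lra|]. rewrite !lsum_cons.
  assert (F a <= G a) by (apply H; simpl; auto).
  assert (lsum l F <= lsum l G) by (apply IHl; intros; apply H; simpl; auto). lra. Qed.
Lemma lsum_nonneg {A} (l : list A) F : (forall a, In a l -> 0 <= F a) -> 0 <= lsum l F.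
Proof. intros H. rewrite <- (lsum_zero l). apply lsum_le; auto. Qed.
Lemma lsum_swap {A B} (l1 : list A) (l2 : list B) (F : A -> B -> R) :
  lsum l1 (fun a => lsum l2 (fun b => F a b)) = lsum l2 (fun b => lsum l1 (fun a => F a b)).
Proof. induction l1.
  - rewrite lsum_nil. symmetry. apply (lsum_zero l2).
  - rewrite lsum_cons, IHl1. rewrite <- lsum_plus. apply lsum_ext. intros; rewrite lsum_cons; lra. Qed.
Lemma lsum_filter {A} (l : list A) (P : A -> bool) F :
  lsum (filter P l) F = lsum l (fun a => if P a then F a else 0).
Proof. induction l; [reflexivity|]. simpl filter. rewrite (lsum_cons a l). destruct (P a); [rewrite lsum_cons|]; rewrite IHl; lra. Qed.
Lemma lsum_const {A} (l : list A) c : lsum l (fun _ => c) = INR (length l) * c.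
Proof. induction l; [unfold lsum; simpl; ring|]. rewrite lsum_cons, IHl. simpl length. rewrite S_INR. ring. Qed.
Lemma lsum_single_le {A} (l : list A) F a : (forall b, In b l -> 0 <= F b) -> In a l -> F a <= lsum l F.
Proof. induction l; intros H Ha; [inversion Ha|]. rewrite lsum_cons. destruct Ha as [<-|Ha].
  - assert (0 <= lsum l F) by (apply lsum_nonneg; intros; apply H; simpl; auto). lra.
  - assert (0 <= F a0) by (apply H; simpl; auto).
    assert (F a <= lsum l F) by (apply IHl; auto; intros; apply H; simpl; auto). lra. Qed.

Lemma fsum_lsum n f : fsum n f = lsum (seq 0 n) f.
Proof. reflexivity. Qed.
Lemma fsum_S n f : fsum (S n) f = fsum n f + f n.
Proof. rewrite !fsum_lsum, seq_S, lsum_app. unfold lsum at 2. simpl. lra. Qed.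
Lemma fsum_0 f : fsum 0 f = 0.
Proof. reflexivity. Qed.
Lemma fsum_ext n f g : (forall i, (i < n)%nat -> f i = g i) -> fsum n f = fsum n g.
Proof. intros H. rewrite !fsum_lsum. apply lsum_ext. intros a Ha. apply in_seq in Ha. apply H; lia. Qed.
Lemma fsum_le n f g : (forall i, (i < n)%nat -> f i <= g i) -> fsum n f <= fsum n g.
Proof. intros H. rewrite !fsum_lsum. apply lsum_le. intros a Ha. apply in_seq in Ha. apply H; lia. Qed.
Lemma fsum_nonneg n f : (forall i, (i < n)%nat -> 0 <= f i) -> 0 <= fsum n f.
Proof. intros H. rewrite !fsum_lsum. apply lsum_nonneg. intros a Ha. apply in_seq in Ha. apply H; lia. Qed.
Lemma fsum_plus n f g : fsum n (fun i => f i + g i) = fsum n f + fsum n g.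
Proof. apply lsum_plus. Qed.
Lemma fsum_minus n f g : fsum n (fun i => f i - g i) = fsum n f - fsum n g.
Proof. apply lsum_minus. Qed.
Lemma fsum_scal n c f : fsum n (fun i => c * f i) = c * fsum n f.
Proof. apply lsum_scal. Qed.
Lemma fsum_scal_r n c f : fsum n (fun i => f i * c) = fsum n f * c.
Proof. apply lsum_scal_r. Qed.
Lemma fsum_const n c : fsum n (fun _ => c) = INR n * c.
Proof. rewrite fsum_lsum, lsum_const, length_seq. reflexivity. Qed.
Lemma fsum_single_le n f i : (forall j, (j < n)%nat -> 0 <= f j) -> (i < n)%nat -> f i <= fsum n f.
Proof. intros H Hi. rewrite fsum_lsum. apply lsum_single_le.
  intros b Hb; apply in_seq in Hb; apply H; lia. apply in_seq; lia. Qed.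
Lemma fsum_delta n i F : (i < n)%nat -> fsum n (fun j => if Nat.eqb j i then F j else 0) = F i.
Proof. induction n; intros Hi; [lia|]. rewrite fsum_S.
  destruct (Nat.eq_dec i n) as [->|Hne].
  - rewrite Nat.eqb_refl. rewrite (fsum_ext n _ (fun _ => 0)).
    rewrite fsum_const; lra. intros j Hj. destruct (Nat.eqb_spec j n); [lia|reflexivity].
  - rewrite IHn by lia. destruct (Nat.eqb_spec n i); [lia|]. lra. Qed.
Lemma fsum_swap n m (F : nat -> nat -> R) :
  fsum n (fun i => fsum m (fun j => F i j)) = fsum m (fun j => fsum n (fun i => F i j)).
Proof. apply lsum_swap. Qed.

Lemma lsum_CS {A} (l : list A) (f g : A -> R) :
  (lsum l (fun a => f a * g a))^2 <= lsum l (fun a => f a ^2) * lsum l (fun a => g a ^2).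
Proof.
  assert (H : 0 <= lsum l (fun a => lsum l (fun b => (f a * g b - f b * g a)^2))).
  { apply lsum_nonneg; intros; apply lsum_nonneg; intros. apply pow2_ge_0. }
  assert (E : lsum l (fun a => lsum l (fun b => (f a * g b - f b * g a)^2)) =
     2 * (lsum l (fun a => f a ^2) * lsum l (fun a => g a ^2)) - 2 * (lsum l (fun a => f a * g a))^2).
  { transitivity (lsum l (fun a => f a ^2 * lsum l (fun b => g b ^2) + g a ^2 * lsum l (fun b => f b ^2)
        - 2 * (f a * g a) * lsum l (fun b => f b * g b))).
    - apply lsum_ext; intros a _. rewrite <- !lsum_scal, <- lsum_plus, <- lsum_minus.
      apply lsum_ext; intros b _. ring.
    - rewrite lsum_minus, lsum_plus, !lsum_scal_r.
      replace (lsum l (fun a => 2 * (f a * g a)) * lsum l (fun b => f b * g b)) with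
        (2 * lsum l (fun a => (f a * g a)) * lsum l (fun b => f b * g b)) by (rewrite lsum_scal; ring).
      ring. }
  lra.
Qed.

Lemma fsum_CS n f g : (fsum n (fun i => f i * g i))^2 <= fsum n (fun i => f i ^2) * fsum n (fun i => g i ^2).
Proof. apply lsum_CS. Qed.

Lemma fsum_CS_sqrt n f g : fsum n (fun i => f i * g i) <= sqrt (fsum n (fun i => f i ^2)) * sqrt (fsum n (fun i => g i ^2)).
Proof.
  destruct (Rle_or_lt (fsum n (fun i => f i * g i)) 0) as [Hle|Hlt].
  - assert (0 <= sqrt (fsum n (fun i => f i ^2)) * sqrt (fsum n (fun i => g i ^2))).
    { apply Rmult_le_pos; apply sqrt_pos. } lra.
  - rewrite <- sqrt_mult_alt. 2:{ apply fsum_nonneg; intros; apply pow2_ge_0. }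
    rewrite <- (sqrt_pow2 (fsum n (fun i => f i * g i))) by lra.
    apply sqrt_le_1_alt. apply fsum_CS.
Qed.

Arguments vadd_assoc {_}. Arguments vadd_comm {_}. Arguments vadd_0 {_}. Arguments vadd_opp {_}.
Arguments vscal_1 {_}. Arguments vscal_assoc {_}. Arguments vscal_distr_v {_}. Arguments vscal_distr_s {_}.
Arguments vnorm_eq0 {_}. Arguments vnorm_scal {_}. Arguments vnorm_triang {_}.


Lemma vadd_0r {V : Banach} (x : V) : vadd x vzero = x.
Proof. rewrite vadd_comm. apply vadd_0. Qed.
Lemma vopp_l {V : Banach} (x : V) : vadd (vopp x) x = vzero.
Proof. rewrite vadd_comm. apply vadd_opp. Qed.
Lemma vadd_cancel_l {V : Banach} (x y z : V) : vadd x y = vadd x z -> y = z.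
Proof. intros H. rewrite <- (vadd_0 y), <- (vadd_0 z), <- (vopp_l x), <- !vadd_assoc, H. reflexivity. Qed.
Lemma vadd_cancel_r {V : Banach} (x y z : V) : vadd y x = vadd z x -> y = z.
Proof. rewrite (vadd_comm y), (vadd_comm z). apply vadd_cancel_l. Qed.
Lemma vscal_0 {V : Banach} (x : V) : vscal 0 x = vzero.
Proof. apply (vadd_cancel_l (vscal 0 x)). rewrite vadd_0r, <- vscal_distr_s, Rplus_0_r. reflexivity. Qed.
Lemma vscal_zero {V : Banach} a : vscal a (@vzero V) = vzero.
Proof. apply (vadd_cancel_l (vscal a vzero)). rewrite vadd_0r, <- vscal_distr_v, vadd_0. reflexivity. Qed.
Lemma vopp_scal {V : Banach} (x : V) : vopp x = vscal (-1) x.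
Proof. apply (vadd_cancel_l x). rewrite vadd_opp. rewrite <- (vscal_1 x) at 1. rewrite <- vscal_distr_s.
  replace (1 + -1) with 0 by ring. rewrite vscal_0. reflexivity. Qed.
Lemma vnorm_zero (V : Banach) : vnorm (@vzero V) = 0.
Proof. rewrite <- (vscal_0 (@vzero V)), vnorm_scal, Rabs_R0. ring. Qed.
Lemma vnorm_opp {V : Banach} (x : V) : vnorm (vopp x) = vnorm x.
Proof. rewrite vopp_scal, vnorm_scal. replace (Rabs (-1)) with 1. ring. unfold Rabs; destruct Rcase_abs; lra. Qed.
Lemma vnorm_nonneg {V : Banach} (x : V) : 0 <= vnorm x.
Proof. pose proof (vnorm_triang x (vopp x)). rewrite vadd_opp, vnorm_zero, vnorm_opp in H. lra. Qed.
Lemma vadd_swap4 {V : Banach} (a b c d : V) : vadd (vadd a b) (vadd c d) = vadd (vadd a c) (vadd b d).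
Proof. rewrite <- !vadd_assoc. f_equal. rewrite !vadd_assoc. f_equal. apply vadd_comm. Qed.
Lemma vopp_add {V : Banach} (x y : V) : vopp (vadd x y) = vadd (vopp x) (vopp y).
Proof. rewrite !vopp_scal. apply vscal_distr_v. Qed.
Lemma vopp_opp {V : Banach} (x : V) : vopp (vopp x) = x.
Proof. rewrite !vopp_scal, vscal_assoc. replace (-1 * -1) with 1 by ring. apply vscal_1. Qed.
Lemma vsub_move {V : Banach} (a b c : V) : vadd a b = c -> b = vadd c (vopp a).
Proof. intros <-. rewrite (vadd_comm a b), <- vadd_assoc, vadd_opp, vadd_0r. reflexivity. Qed.
Lemma vnorm_sub_sym {V : Banach} (x y : V) : vnorm (vadd x (vopp y)) = vnorm (vadd y (vopp x)).
Proof. rewrite <- vnorm_opp, vopp_add, vopp_opp, vadd_comm. reflexivity. Qed.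
Lemma vnorm_triang_sub {V : Banach} (x y z : V) :
  vnorm (vadd x (vopp z)) <= vnorm (vadd x (vopp y)) + vnorm (vadd y (vopp z)).
Proof. replace (vadd x (vopp z)) with (vadd (vadd x (vopp y)) (vadd y (vopp z))). apply vnorm_triang.
  rewrite <- vadd_assoc, (vadd_assoc (vopp y)), vopp_l, vadd_0. reflexivity. Qed.
Lemma vnorm_le_sub {V : Banach} (x y : V) : vnorm x <= vnorm y + vnorm (vadd x (vopp y)).
Proof. pose proof (vnorm_triang y (vadd x (vopp y))).
  rewrite (vadd_comm x), vadd_assoc, vadd_opp, vadd_0 in H. rewrite (vadd_comm x). exact H. Qed.

Lemma vsum_S {V : Banach} n (f : nat -> V) : vsum (S n) f = vadd (vsum n f) (f n).
Proof. unfold vsum. rewrite seq_S, map_app, fold_right_app. simpl.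
  induction (map f (seq 0 n)); simpl. rewrite vadd_0r, vadd_0. reflexivity.
  rewrite IHl, vadd_assoc. reflexivity. Qed.
Lemma vsum_ext {V : Banach} n (f g : nat -> V) : (forall i, (i < n)%nat -> f i = g i) -> vsum n f = vsum n g.
Proof. induction n; intros H; [reflexivity|]. rewrite !vsum_S, (H n) by lia. rewrite IHn. reflexivity. intros; apply H; lia. Qed.
Lemma vnorm_vsum {V : Banach} n (f : nat -> V) : vnorm (vsum n f) <= fsum n (fun i => vnorm (f i)).
Proof. induction n. simpl. unfold vsum. simpl. rewrite vnorm_zero, fsum_0. lra.
  rewrite vsum_S, fsum_S. pose proof (vnorm_triang (vsum n f) (f n)). lra. Qed.

Definition Sub {A : Type} (X Y : A -> Prop) := forall x, X x -> Y x.
Definition Uni {A : Type} (K : (A -> Prop) -> Prop) : A -> Prop := fun x => exists X, K X /\ X x.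
Definition Kchain {A : Type} (K : (A -> Prop) -> Prop) := forall X Y, K X -> K Y -> Sub X Y \/ Sub Y X.
Definition Adm {A : Type} (g : (A -> Prop) -> (A -> Prop)) (S : (A -> Prop) -> Prop) :=
  (forall X, S X -> S (g X)) /\ (forall K, Kchain K -> (forall X, K X -> S X) -> S (Uni K)).
Definition Tow {A : Type} (g : (A -> Prop) -> (A -> Prop)) (X : A -> Prop) := forall S, Adm g S -> S X.

Lemma set_ext {A : Type} (X Y : A -> Prop) : Sub X Y -> Sub Y X -> X = Y.
Proof. intros H1 H2. apply functional_extensionality; intro x. apply propositional_extensionality; split; auto. Qed.

Lemma Tow_adm {A : Type} g : Adm g (@Tow A g).
Proof. split.
  - intros X HX S HS. apply (proj1 HS). apply HX; auto.
  - intros K HK HKT S HS. apply (proj2 HS); auto. intros X HX. apply HKT; auto. Qed.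

Lemma Tow_ind {A : Type} g (P : (A -> Prop) -> Prop) :
  Adm g (fun X => Tow g X /\ P X) -> forall X, Tow g X -> P X.
Proof. intros H X HX. apply (HX _ H). Qed.

Definition extreme {A : Type} g (c : A -> Prop) :=
  Tow g c /\ forall x, Tow g x -> Sub x c -> ~ Sub c x -> Sub (g x) c.

Lemma BW_L1 {A : Type} g (Hinf : forall X : A -> Prop, Sub X (g X)) c :
  extreme g c -> forall x, Tow g x -> Sub x c \/ Sub (g c) x.
Proof.
  intros [Hc Hext]. apply Tow_ind. split.
  - intros x [Hx H]. split; [apply (proj1 (Tow_adm g)); auto|].
    destruct H as [H|H].
    + destruct (classic (Sub c x)) as [H'|H'].
      * assert (x = c) by (apply set_ext; auto). subst. right. intros z Hz; auto.
      * left. apply Hext; auto.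
    + right. intros z Hz. apply Hinf. apply H; auto.
  - intros K HK HKS. split.
    + apply (proj2 (Tow_adm g)); auto. intros X HX; apply HKS; auto.
    + destruct (classic (forall X, K X -> Sub X c)) as [Hall|Hnot].
      * left. intros z [X [HX Hz]]. apply (Hall X HX z Hz).
      * apply not_all_ex_not in Hnot. destruct Hnot as [X HX].
        apply imply_to_and in HX. destruct HX as [HX1 HX2].
        destruct (proj2 (HKS X HX1)) as [H|H]; [contradiction|].
        right. intros z Hz. exists X. split; auto.
Qed.

Lemma BW_L2 {A : Type} g (Hinf : forall X : A -> Prop, Sub X (g X)) c : Tow g c -> extreme g c.
Proof.
  revert c. apply Tow_ind. split.
  - intros c [Hc Hce]. split; [apply (proj1 (Tow_adm g)); auto|]. split; [apply (proj1 (Tow_adm g)); auto|].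
    intros x Hx Hsub Hnsub.
    destruct (BW_L1 g Hinf c Hce x Hx) as [H|H]; [|contradiction].
    destruct (classic (Sub c x)) as [H'|H'].
    + assert (x = c) by (apply set_ext; auto). subst. intros z Hz; auto.
    + intros z Hz. apply Hinf. apply (proj2 Hce x Hx H H'); auto.
  - intros K HK HKS.
    assert (HT : Tow g (Uni K)) by (apply (proj2 (Tow_adm g)); auto; intros X HX; apply HKS; auto).
    split; auto. split; auto.
    intros x Hx Hsub Hnsub.
    assert (exists k, K k /\ ~ Sub k x).
    { apply NNPP; intro Hn. apply Hnsub. intros z [X [HX Hz]].
      apply NNPP; intro Hzx. apply Hn. exists X. split; [exact HX| intro HS; apply Hzx, HS, Hz]. }
    destruct H as [k [Hk Hkx]].
    destruct (HKS k Hk) as [_ Hke].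
    destruct (BW_L1 g Hinf k Hke x Hx) as [H|H].
    + intros z Hz. exists k. split; auto. apply (proj2 Hke x Hx H Hkx); auto.
    + exfalso. apply Hkx. intros z Hz. apply H. apply Hinf; auto.
Qed.

Lemma BW {A : Type} (g : (A -> Prop) -> (A -> Prop)) :
  (forall X, Sub X (g X)) -> exists U, Tow g U /\ Sub (g U) U.
Proof.
  intros Hinf.
  assert (Hch : Kchain (Tow g)).
  { intros X Y HX HY. destruct (BW_L1 g Hinf Y (BW_L2 g Hinf Y HY) X HX) as [H|H]; auto.
    right. intros z Hz. apply H, Hinf; auto. }
  exists (Uni (Tow g)).
  assert (HU : Tow g (Uni (Tow g))) by (apply (proj2 (Tow_adm g)); auto).
  split; auto.
  intros z Hz. exists (g (Uni (Tow g))). split; auto. apply (proj1 (Tow_adm g)); auto.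
Qed.

Definition pchain {A : Type} (le : A -> A -> Prop) (C : A -> Prop) :=
  forall x y, C x -> C y -> le x y \/ le y x.

Lemma zorn {A : Type} (le : A -> A -> Prop) :
  (forall x, le x x) -> (forall x y z, le x y -> le y z -> le x z) ->
  (forall C, pchain le C -> exists u, forall x, C x -> le x u) ->
  exists m, forall x, le m x -> le x m.
Proof.
  intros Hrefl Htrans Hub.
  apply NNPP; intro Hno.
  assert (Hsucc : forall m, exists x, le m x /\ ~ le x m).
  { intro m. apply NNPP; intro H. apply Hno. exists m. intros x Hx. apply NNPP; intro H'. apply H. exists x; auto. }
  assert (Hs : forall C, exists z, pchain le C -> forall x, C x -> le x z /\ ~ le z x).
  { intro C. destruct (classic (pchain le C)) as [HC|HC].
    - destruct (Hub C HC) as [u Hu]. destruct (Hsucc u) as [z [Hz1 Hz2]]. exists z. intros _ x Hx. split.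
      + eapply Htrans; eauto.
      + intro Hzx. apply Hz2. eapply Htrans; eauto.
    - destruct (Hub (fun _ => False)) as [u _]. { intros x y []. } exists u. intros H; contradiction. }
  pose (s := fun C => proj1_sig (constructive_indefinite_description _ (Hs C))).
  assert (Hsp : forall C, pchain le C -> forall x, C x -> le x (s C) /\ ~ le (s C) x).
  { intros C. unfold s. destruct (constructive_indefinite_description _ (Hs C)); simpl; auto. }
  pose (g := fun (X : A -> Prop) (x : A) => X x \/ x = s X).
  assert (Hinf : forall X, Sub X (g X)) by (intros X z Hz; left; auto).
  destruct (BW g Hinf) as [U [HU HgU]].
  assert (Hchains : forall X, Tow g X -> pchain le X).
  { apply Tow_ind. split.
    - intros X [HX HXc]. split; [apply (proj1 (Tow_adm g)); auto|].
      intros x y [Hx| ->] [Hy| ->].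
      + auto.
      + left. apply (Hsp X HXc x Hx).
      + right. apply (Hsp X HXc y Hy).
      + left; auto.
    - intros K HK HKS. split; [apply (proj2 (Tow_adm g)); auto; intros X HX; apply HKS; auto|].
      intros x y [X [HX Hx]] [Y [HY Hy]].
      destruct (HK X Y HX HY) as [H|H].
      + apply (proj2 (HKS Y HY)); auto.
      + apply (proj2 (HKS X HX)); auto. }
  assert (HUc := Hchains U HU).
  assert (Hin : U (s U)) by (apply HgU; right; reflexivity).
  destruct (Hsp U HUc (s U) Hin) as [_ H]. apply H, Hrefl.
Qed.

Record PE (V : Banach) (v : V) := mkPE {
  pD : V -> Prop; pg : V -> R;
  pD_add : forall x y, pD x -> pD y -> pD (vadd x y);
  pD_scal : forall a x, pD x -> pD (vscal a x);
  pg_add : forall x y, pD x -> pD y -> pg (vadd x y) = pg x + pg y;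
  pg_scal : forall a x, pD x -> pg (vscal a x) = a * pg x;
  pg_le : forall x, pD x -> pg x <= vnorm x;
  pD_v : pD v; pg_v : pg v = vnorm v }.
Arguments pD {V v}. Arguments pg {V v}. Arguments pD_add {V v}. Arguments pD_scal {V v}.
Arguments pg_add {V v}. Arguments pg_scal {V v}. Arguments pg_le {V v}. Arguments pD_v {V v}. Arguments pg_v {V v}.

Definition PEle {V : Banach} {v : V} (P Q : PE V v) :=
  (forall x, pD P x -> pD Q x) /\ (forall x, pD P x -> pg Q x = pg P x).

Definition iR : inhabited R := inhabits 0.

Lemma pD_zero {V v} (P : PE V v) : pD P vzero.
Proof. rewrite <- (vscal_0 v). apply pD_scal, pD_v. Qed.
Lemma pg_zero {V v} (P : PE V v) : pg P vzero = 0.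
Proof. rewrite <- (vscal_0 v). rewrite pg_scal by apply pD_v. ring. Qed.

Definition D0 {V : Banach} (v : V) (x : V) : Prop := exists a, x = vscal a v.
Definition g0 {V : Banach} (v : V) (x : V) : R :=
  epsilon iR (fun r => exists a, x = vscal a v /\ r = a * vnorm v).

Lemma g0_eq {V : Banach} (v : V) a : g0 v (vscal a v) = a * vnorm v.
Proof.
  unfold g0.
  assert (Hex : exists r, exists a0, vscal a v = vscal a0 v /\ r = a0 * vnorm v) by (exists (a * vnorm v); exists a; auto).
  destruct (epsilon_spec iR _ Hex) as [a' [H1 H2]].
  rewrite H2.
  assert (Hz : vscal (a - a') v = vzero).
  { unfold Rminus. rewrite vscal_distr_s, H1, <- vscal_distr_s. replace (a' + - a') with 0 by ring. apply vscal_0. }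
  assert (Rabs (a - a') * vnorm v = 0) by (rewrite <- vnorm_scal, Hz; apply vnorm_zero).
  apply Rmult_integral in H. destruct H as [H|H].
  - assert (a = a'). { destruct (Req_dec a a'); auto. exfalso. apply Rabs_no_R0 in H; auto. lra. } subst; auto.
  - rewrite H; ring.
Qed.

Definition P0 {V : Banach} (v : V) : PE V v.
Proof.
  refine (mkPE V v (D0 v) (g0 v) _ _ _ _ _ _ _).
  - intros x y [a ->] [b ->]. exists (a + b). rewrite vscal_distr_s; auto.
  - intros c x [a ->]. exists (c * a). rewrite vscal_assoc; auto.
  - intros x y [a ->] [b ->]. rewrite <- vscal_distr_s, !g0_eq. ring.
  - intros c x [a ->]. rewrite vscal_assoc, !g0_eq. ring.
  - intros x [a ->]. rewrite g0_eq, vnorm_scal. apply Rmult_le_compat_r. apply vnorm_nonneg. apply Rle_abs.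
  - exists 1. rewrite vscal_1; auto.
  - replace (g0 v v) with (g0 v (vscal 1 v)) by (rewrite vscal_1; auto). rewrite g0_eq. ring.
Defined.

Definition uD {V : Banach} {v : V} (C : PE V v -> Prop) (x : V) : Prop := exists P, C P /\ pD P x.
Definition ug {V : Banach} {v : V} (C : PE V v -> Prop) (x : V) : R :=
  epsilon iR (fun r => exists P, C P /\ pD P x /\ r = pg P x).

Lemma ug_eq {V : Banach} {v : V} (C : PE V v -> Prop) P x :
  pchain PEle C -> C P -> pD P x -> ug C x = pg P x.
Proof.
  intros Hch HP Hx. unfold ug.
  assert (Hex : exists r, exists P, C P /\ pD P x /\ r = pg P x) by (exists (pg P x); eauto).
  destruct (epsilon_spec iR _ Hex) as [P' [HP' [Hx' ->]]].
  destruct (Hch P P' HP HP') as [[_ H]|[_ H]]; rewrite H; auto.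
Qed.

Lemma chain_common {V : Banach} {v : V} (C : PE V v -> Prop) x y :
  pchain PEle C -> uD C x -> uD C y -> exists Q, C Q /\ pD Q x /\ pD Q y.
Proof.
  intros Hch [P [HP Hx]] [P' [HP' Hy]].
  destruct (Hch P P' HP HP') as [[H _]|[H _]].
  - exists P'. auto.
  - exists P. auto.
Qed.

Definition Punion {V : Banach} {v : V} (C : PE V v -> Prop) (Hch : pchain PEle C) (P1 : PE V v) (H1 : C P1) : PE V v.
Proof.
  refine (mkPE V v (uD C) (ug C) _ _ _ _ _ _ _).
  - intros x y Hx Hy. destruct (chain_common C x y Hch Hx Hy) as [Q [HQ [Hx' Hy']]].
    exists Q. split; auto. apply pD_add; auto.
  - intros a x [Q [HQ Hx]]. exists Q. split; auto. apply pD_scal; auto.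
  - intros x y Hx Hy. destruct (chain_common C x y Hch Hx Hy) as [Q [HQ [Hx' Hy']]].
    rewrite !(ug_eq C Q); auto. apply pg_add; auto. apply pD_add; auto.
  - intros a x [Q [HQ Hx]]. rewrite !(ug_eq C Q); auto. apply pg_scal; auto. apply pD_scal; auto.
  - intros x [Q [HQ Hx]]. rewrite (ug_eq C Q); auto. apply pg_le; auto.
  - exists P1. split; auto. apply pD_v.
  - rewrite (ug_eq C P1); auto. apply pg_v. apply pD_v.
Defined.

Lemma Punion_ub {V : Banach} {v : V} (C : PE V v -> Prop) Hch P1 H1 P :
  C P -> PEle P (Punion C Hch P1 H1).
Proof.
  intros HP. split; simpl.
  - intros x Hx. exists P; auto.
  - intros x Hx. apply ug_eq; auto.
Qed.

Lemma keybound {V : Banach} {v : V} (M : PE V v) x0 d d2 :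
  pD M d -> pD M d2 ->
  pg M d - vnorm (vadd d (vopp x0)) <= vnorm (vadd d2 x0) - pg M d2.
Proof.
  intros Hd Hd2.
  assert (H1 : pg M d + pg M d2 <= vnorm (vadd d d2)) by (rewrite <- pg_add; auto; apply pg_le, pD_add; auto).
  assert (E : vadd (vadd d (vopp x0)) (vadd d2 x0) = vadd d d2).
  { rewrite vadd_swap4, vopp_l, vadd_0r. reflexivity. }
  pose proof (vnorm_triang (vadd d (vopp x0)) (vadd d2 x0)). rewrite E in H. lra.
Qed.

Lemma decomp_uniq {V : Banach} {v : V} (M : PE V v) x0 d d' s s' :
  ~ pD M x0 -> pD M d -> pD M d' -> vadd d (vscal s x0) = vadd d' (vscal s' x0) -> d = d' /\ s = s'.
Proof.
  intros Hx0 Hd Hd' E.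
  assert (Hs : s = s').
  { apply NNPP; intro Hne.
    assert (E2 : vscal (s - s') x0 = vadd d' (vopp d)).
    { apply vsub_move in E. unfold Rminus. rewrite vscal_distr_s, E.
      rewrite <- (vadd_assoc (vadd d' (vscal s' x0))), vadd_swap4, <- vscal_distr_s.
      replace (s' + - s') with 0 by ring. rewrite vscal_0, vadd_0r. reflexivity. }
    apply Hx0. replace x0 with (vscal (/ (s - s')) (vscal (s - s') x0)).
    - rewrite E2. apply pD_scal, pD_add; auto. rewrite vopp_scal. apply pD_scal; auto.
    - rewrite vscal_assoc, Rinv_l, vscal_1; auto. lra. }
  subst. split; auto. apply (vadd_cancel_r (vscal s' x0)); auto.
Qed.

Lemma extend_step {V : Banach} {v : V} (M : PE V v) x0 :
  ~ pD M x0 -> exists Q : PE V v, PEle M Q /\ pD Q x0.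
Proof.
  intros Hx0.
  set (D := pD M). set (g := pg M).
  set (E := fun r => exists d, D d /\ r = g d - vnorm (vadd d (vopp x0))).
  assert (Hb : bound E).
  { exists (vnorm (vadd vzero x0) - g vzero). intros r [d [Hd ->]]. apply keybound; auto. apply pD_zero. }
  assert (Hne : exists r, E r) by (exists (g vzero - vnorm (vadd vzero (vopp x0))); exists vzero; split; auto; apply pD_zero).
  destruct (completeness E Hb Hne) as [c [Hc1 Hc2]].
  assert (Hc1' : forall d, D d -> g d - vnorm (vadd d (vopp x0)) <= c) by (intros d Hd; apply Hc1; exists d; auto).
  assert (Hc2' : forall d2, D d2 -> c <= vnorm (vadd d2 x0) - g d2).
  { intros d2 Hd2. apply Hc2. intros r [d [Hd ->]]. apply keybound; auto. }
  set (D' := fun y => exists d s, D d /\ y = vadd d (vscal s x0)).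
  set (g' := fun y => epsilon iR (fun r => exists d s, D d /\ y = vadd d (vscal s x0) /\ r = g d + s * c)).
  assert (Hg' : forall d s, D d -> g' (vadd d (vscal s x0)) = g d + s * c).
  { intros d s Hd. unfold g'.
    assert (Hex : exists r, exists d0 s0, D d0 /\ vadd d (vscal s x0) = vadd d0 (vscal s0 x0) /\ r = g d0 + s0 * c)
      by (exists (g d + s * c); exists d, s; auto).
    destruct (epsilon_spec iR _ Hex) as [d0 [s0 [Hd0 [E0 ->]]]].
    destruct (decomp_uniq M x0 d d0 s s0 Hx0 Hd Hd0 E0) as [-> ->]. reflexivity. }
  assert (Hadd : forall d1 s1 d2 s2, vadd (vadd d1 (vscal s1 x0)) (vadd d2 (vscal s2 x0)) =
                                    vadd (vadd d1 d2) (vscal (s1 + s2) x0)).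
  { intros. rewrite vadd_swap4, vscal_distr_s. reflexivity. }
  assert (Hscal : forall a d s, vscal a (vadd d (vscal s x0)) = vadd (vscal a d) (vscal (a * s) x0)).
  { intros. rewrite vscal_distr_v, vscal_assoc. reflexivity. }
  assert (Hle : forall d s, D d -> g d + s * c <= vnorm (vadd d (vscal s x0))).
  { intros d s Hd. destruct (Rtotal_order s 0) as [Hs|[Hs|Hs]].
    - set (r := - s). assert (Hr : 0 < r) by (unfold r; lra).
      set (d1 := vscal (/ r) d). assert (Hd1 : D d1) by (apply pD_scal; auto).
      pose proof (Hc1' d1 Hd1) as H.
      assert (Eg : g d = r * g d1).
      { unfold d1, g. rewrite pg_scal by auto. field_simplify; auto; lra. }
      assert (En : vnorm (vadd d (vscal s x0)) = r * vnorm (vadd d1 (vopp x0))).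
      { assert (Ev : vadd d (vscal s x0) = vscal r (vadd d1 (vopp x0))).
        { symmetry. unfold d1. rewrite vscal_distr_v, vscal_assoc, Rinv_r, vscal_1 by lra.
          rewrite vopp_scal, vscal_assoc. f_equal. f_equal. unfold r; ring. }
        rewrite Ev, vnorm_scal, Rabs_pos_eq by lra. reflexivity. }
      rewrite Eg, En. assert (r * (g d1 - vnorm (vadd d1 (vopp x0))) <= r * c) by (apply Rmult_le_compat_l; lra).
      unfold r in *. nra.
    - subst. rewrite vscal_0, vadd_0r. unfold g. rewrite Rmult_0_l, Rplus_0_r. apply pg_le; auto.
    - set (d1 := vscal (/ s) d). assert (Hd1 : D d1) by (apply pD_scal; auto).
      pose proof (Hc2' d1 Hd1) as H.
      assert (Eg : g d = s * g d1).
      { unfold d1, g. rewrite pg_scal by auto. field_simplify; auto; lra. }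
      assert (En : vnorm (vadd d (vscal s x0)) = s * vnorm (vadd d1 x0)).
      { assert (Ev : vadd d (vscal s x0) = vscal s (vadd d1 x0)).
        { symmetry. unfold d1. rewrite vscal_distr_v, vscal_assoc, Rinv_r, vscal_1 by lra. reflexivity. }
        rewrite Ev, vnorm_scal, Rabs_pos_eq by lra. reflexivity. }
      rewrite Eg, En. assert (s * c <= s * (vnorm (vadd d1 x0) - g d1)) by (apply Rmult_le_compat_l; lra).
      nra. }
  assert (HDv : forall d, D d -> d = vadd d (vscal 0 x0)) by (intros; rewrite vscal_0, vadd_0r; auto).
  unshelve eexists (mkPE V v D' g' _ _ _ _ _ _ _).
  - intros x y [d1 [s1 [Hd1 ->]]] [d2 [s2 [Hd2 ->]]]. exists (vadd d1 d2), (s1 + s2). split.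
    apply pD_add; auto. apply Hadd.
  - intros a x [d [s [Hd ->]]]. exists (vscal a d), (a * s). split. apply pD_scal; auto. apply Hscal.
  - intros x y [d1 [s1 [Hd1 ->]]] [d2 [s2 [Hd2 ->]]]. rewrite Hadd, !Hg'; auto.
    unfold g. rewrite pg_add; auto. fold g. ring. apply pD_add; auto.
  - intros a x [d [s [Hd ->]]]. rewrite Hscal, !Hg'; auto. unfold g. rewrite pg_scal; auto. ring.
    apply pD_scal; auto.
  - intros x [d [s [Hd ->]]]. rewrite Hg'; auto.
  - exists v, 0. split. apply pD_v. apply HDv, pD_v.
  - rewrite (HDv v (pD_v M)) at 1. rewrite Hg' by apply pD_v. unfold g. rewrite pg_v. ring.
  - cbn [pD pg]. split.
    + split.
      * intros x Hx. exists x, 0. split; auto.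
      * intros x Hx. change (g' x = g x). rewrite (HDv x Hx) at 1. rewrite Hg'; auto. ring.
    + exists vzero, 1. split. apply pD_zero. rewrite vadd_0, vscal_1; auto.
Qed.

Theorem hahn_banach (V : Banach) (v : V) : exists phi : V -> R, dual_ball phi /\ phi v = vnorm v.
Proof.
  destruct (zorn (@PEle V v)) as [M HM].
  - intros P; split; auto.
  - intros P Q R [H1 H2] [H3 H4]. split; auto. intros x Hx. rewrite H4, H2; auto.
  - intros C Hch. destruct (classic (exists P, C P)) as [[P1 H1]|Hn].
    + exists (Punion C Hch P1 H1). intros P HP. apply Punion_ub; auto.
    + exists (P0 v). intros P HP. exfalso; eauto.
  - assert (Hall : forall x, pD M x).
    { intros x0. apply NNPP; intro Hx0. destruct (extend_step M x0 Hx0) as [Q [HMQ HQ]].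
      apply Hx0. apply (proj1 (HM Q HMQ)); auto. }
    exists (pg M). split; [|apply pg_v]. split; [|split].
    + intros; apply pg_add; auto.
    + intros; apply pg_scal; auto.
    + intros x. apply Rabs_le. split.
      * assert (pg M (vscal (-1) x) <= vnorm (vscal (-1) x)) by (apply pg_le; auto).
        rewrite pg_scal, vnorm_scal in H by auto. replace (Rabs (-1)) with 1 in H. lra.
        unfold Rabs; destruct Rcase_abs; lra.
      * apply pg_le; auto.
Qed.

Lemma exp_ge_1plus x : 1 + x <= exp x.
Proof. destruct (Req_dec x 0) as [->|H]. rewrite exp_0; lra. left; apply exp_ineq1; auto. Qed.

Lemma Ex_lsum mu F : Ex mu F = lsum mu (fun xp => snd xp * F (fst xp)).
Proof. reflexivity. Qed.

Definition wnn (mu : law) := forall xp, In xp mu -> 0 <= snd xp.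
Lemma prob_wnn mu : is_prob mu -> wnn mu.
Proof. intros [H _]; exact H. Qed.
Lemma prob_sum mu : is_prob mu -> lsum mu snd = 1.
Proof. intros [_ H]; exact H. Qed.

Lemma Ex_ext mu F G : (forall xp, In xp mu -> F (fst xp) = G (fst xp)) -> Ex mu F = Ex mu G.
Proof. intros H. rewrite !Ex_lsum. apply lsum_ext. intros a Ha; rewrite H; auto. Qed.
Lemma Ex_le mu F G : wnn mu -> (forall xp, In xp mu -> F (fst xp) <= G (fst xp)) -> Ex mu F <= Ex mu G.
Proof. intros Hw H. rewrite !Ex_lsum. apply lsum_le. intros a Ha. apply Rmult_le_compat_l; auto. Qed.
Lemma Ex_nonneg mu F : wnn mu -> (forall xp, In xp mu -> 0 <= F (fst xp)) -> 0 <= Ex mu F.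
Proof. intros Hw H. rewrite Ex_lsum. apply lsum_nonneg. intros a Ha. apply Rmult_le_pos; auto. Qed.
Lemma Ex_plus mu F G : Ex mu (fun x => F x + G x) = Ex mu F + Ex mu G.
Proof. rewrite !Ex_lsum, <- lsum_plus. apply lsum_ext; intros; ring. Qed.
Lemma Ex_minus mu F G : Ex mu (fun x => F x - G x) = Ex mu F - Ex mu G.
Proof. rewrite !Ex_lsum, <- lsum_minus. apply lsum_ext; intros; ring. Qed.
Lemma Ex_scal mu c F : Ex mu (fun x => c * F x) = c * Ex mu F.
Proof. rewrite !Ex_lsum, <- lsum_scal. apply lsum_ext; intros; ring. Qed.
Lemma Ex_const mu c : is_prob mu -> Ex mu (fun _ => c) = c.
Proof. intros Hp. rewrite Ex_lsum, lsum_scal_r, prob_sum; auto; ring. Qed.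
Lemma Ex_fsum mu n (F : nat -> (nat -> R) -> R) :
  Ex mu (fun x => fsum n (fun i => F i x)) = fsum n (fun i => Ex mu (F i)).
Proof. rewrite Ex_lsum.
  transitivity (lsum mu (fun xp => lsum (seq 0 n) (fun i => snd xp * F i (fst xp)))).
  - apply lsum_ext; intros. rewrite lsum_scal. reflexivity.
  - rewrite lsum_swap. reflexivity. Qed.
Lemma lsum_pos {A} (l : list A) (w F : A -> R) : (forall a, In a l -> 0 <= w a) -> lsum l w = 1 ->
  (forall a, 0 < F a) -> 0 < lsum l (fun a => w a * F a).
Proof. induction l; intros Hw Hs HF. unfold lsum in Hs; simpl in Hs; lra.
  rewrite lsum_cons in *. assert (0 <= w a) by (apply Hw; simpl; auto).
  destruct (Rle_lt_or_eq_dec 0 (w a) H) as [Hlt|Heq].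
  - assert (0 <= lsum l (fun a => w a * F a)). { apply lsum_nonneg; intros. apply Rmult_le_pos. apply Hw; simpl; auto. left; auto. }
    pose proof (HF a). nra.
  - rewrite <- Heq. rewrite Rmult_0_l, Rplus_0_l. apply IHl; auto. intros; apply Hw; simpl; auto. lra. Qed.
Lemma Ex_pos mu F : is_prob mu -> (forall x, 0 < F x) -> 0 < Ex mu F.
Proof. intros Hp HF. rewrite Ex_lsum. apply (lsum_pos mu snd (fun xp => F (fst xp))); auto.
  apply prob_wnn; auto. apply prob_sum; auto. Qed.

Lemma agree_spec n i x y : agree_off n i x y = true <-> (forall j, (j < n)%nat -> j <> i -> x j = y j).
Proof. unfold agree_off. rewrite forallb_forall. split.
  - intros H j Hj Hji. specialize (H j (proj2 (in_seq n 0 j) (conj (Nat.le_0_l j) Hj))).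
    apply Bool.orb_true_iff in H. destruct H as [H|H]. apply Nat.eqb_eq in H; contradiction.
    destruct (Req_EM_T (x j) (y j)); auto. discriminate.
  - intros H j Hj. apply in_seq in Hj. destruct (Nat.eqb_spec j i); auto. simpl.
    destruct (Req_EM_T (x j) (y j)) as [e|e]; auto. exfalso; apply e, H; auto; lia. Qed.
Lemma agree_sym n i x y : agree_off n i x y = agree_off n i y x.
Proof. apply Bool.eq_true_iff_eq. rewrite !agree_spec. split; intros H j Hj Hji; symmetry; auto. Qed.
Lemma agree_trans n i x y z : agree_off n i x y = true -> agree_off n i y z = true -> agree_off n i x z = true.
Proof. rewrite !agree_spec. intros H1 H2 j Hj Hji. rewrite H1, H2; auto. Qed.
Lemma agree_refl n i x : agree_off n i x x = true.
Proof. rewrite agree_spec. auto. Qed.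
Lemma agree_eq n i x y z : agree_off n i x y = true -> agree_off n i x z = agree_off n i y z.
Proof. intros H. apply Bool.eq_true_iff_eq. split; intros H'.
  - apply (agree_trans n i y x z); auto. rewrite agree_sym; auto.
  - apply (agree_trans n i x y z); auto. Qed.
Lemma trunc_upd_agree n i x y : agree_off n i x y = true -> trunc n (upd x i (y i)) = trunc n y.
Proof. intros H. rewrite agree_spec in H. apply functional_extensionality; intro k. unfold trunc, upd.
  destruct (Nat.ltb_spec k n); auto. destruct (Nat.eqb_spec k i); subst; auto. Qed.

Lemma var_bound (c : law) (G B : (nat -> R) -> R) :
  wnn c -> (forall yp, In yp c -> 0 <= B (fst yp)) ->
  (forall yp yp', In yp c -> In yp' c -> (G (fst yp) - G (fst yp'))^2 <= B (fst yp) + B (fst yp')) ->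
  Ex c (fun y => (G y)^2) / fold_right Rplus 0 (map snd c) - (Ex c G / fold_right Rplus 0 (map snd c))^2
    <= Ex c B / fold_right Rplus 0 (map snd c).
Proof.
  intros Hw HB Hpair.
  change (fold_right Rplus 0 (map snd c)) with (lsum c snd).
  set (m := lsum c snd). set (E1 := Ex c G). set (E2 := Ex c (fun y => (G y)^2)). set (EB := Ex c B).
  assert (Hm : 0 <= m) by (apply lsum_nonneg; auto).
  assert (DS : lsum c (fun yp => lsum c (fun yp' => snd yp * snd yp' * (G (fst yp) - G (fst yp'))^2)) = 2 * m * E2 - 2 * E1 ^ 2).
  { transitivity (lsum c (fun yp => (snd yp * G (fst yp) ^2) * m + snd yp * E2 - 2 * (snd yp * G (fst yp)) * E1)).
    - apply lsum_ext; intros yp _. unfold m, E1, E2. rewrite !Ex_lsum. rewrite <- lsum_scal, <- lsum_scal, <- lsum_scal.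
      rewrite <- lsum_plus, <- lsum_minus. apply lsum_ext; intros; ring.
    - rewrite lsum_minus, lsum_plus, lsum_scal_r, lsum_scal_r, lsum_scal_r.
      replace (lsum c (fun a => 2 * (snd a * G (fst a)))) with (2 * E1) by (unfold E1; rewrite Ex_lsum, lsum_scal; auto).
      unfold E1, E2. rewrite !Ex_lsum. fold m. ring. }
  assert (DB : lsum c (fun yp => lsum c (fun yp' => snd yp * snd yp' * (G (fst yp) - G (fst yp'))^2)) <= 2 * m * EB).
  { transitivity (lsum c (fun yp => lsum c (fun yp' => snd yp * snd yp' * (B (fst yp) + B (fst yp'))))).
    - apply lsum_le; intros; apply lsum_le; intros. apply Rmult_le_compat_l; auto. apply Rmult_le_pos; auto.
    - right. transitivity (lsum c (fun yp => (snd yp * B (fst yp)) * m + snd yp * EB)).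
      + apply lsum_ext; intros yp _. unfold m, EB. rewrite Ex_lsum, <- !lsum_scal, <- lsum_plus. apply lsum_ext; intros; ring.
      + rewrite lsum_plus, lsum_scal_r, lsum_scal_r. unfold EB. rewrite Ex_lsum. fold m. ring. }
  destruct (Rle_lt_or_eq_dec 0 m Hm) as [Hpos|Hz].
  - assert (m * E2 - E1 ^ 2 <= m * EB) by lra.
    replace (E2 / m - (E1 / m) ^ 2) with ((m * E2 - E1^2) / (m * m)) by (field; lra).
    replace (EB / m) with ((m * EB) / (m * m)) by (field; lra).
    apply Rmult_le_compat_r; auto. left; apply Rinv_0_lt_compat; nra.
  - rewrite <- Hz. unfold Rdiv. rewrite Rinv_0. lra.
Qed.

Lemma same_law mu n i (B : (nat -> R) -> R) : wnn mu ->
  Ex mu (fun x => Ex (cond_atoms mu n i x) B / fold_right Rplus 0 (map snd (cond_atoms mu n i x))) = Ex mu B.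
Proof.
  intros Hw.
  set (R := fun x y => agree_off n i x y).
  set (m := fun x => lsum mu (fun yp => if R x (fst yp) then snd yp else 0)).
  assert (Hm : forall x, fold_right Rplus 0 (map snd (cond_atoms mu n i x)) = m x).
  { intros x. change (fold_right Rplus 0 (map snd (cond_atoms mu n i x))) with (lsum (cond_atoms mu n i x) snd).
    unfold cond_atoms. rewrite lsum_filter. reflexivity. }
  assert (HE : forall x, Ex (cond_atoms mu n i x) B = lsum mu (fun yp => if R x (fst yp) then snd yp * B (fst yp) else 0)).
  { intros x. rewrite Ex_lsum. unfold cond_atoms. rewrite lsum_filter. reflexivity. }
  assert (Hmeq : forall x y, R x y = true -> m x = m y).
  { intros x y H. unfold m. apply lsum_ext. intros zp _. unfold R. rewrite (agree_eq n i x y (fst zp) H). reflexivity. }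
  rewrite Ex_lsum.
  transitivity (lsum mu (fun xp => lsum mu (fun yp => if R (fst xp) (fst yp) then snd xp * snd yp * B (fst yp) / m (fst xp) else 0))).
  { apply lsum_ext; intros xp _. rewrite Hm, HE. unfold Rdiv. rewrite <- lsum_scal_r, <- lsum_scal.
    apply lsum_ext; intros yp _. destruct (R (fst xp) (fst yp)); ring. }
  rewrite lsum_swap. rewrite Ex_lsum. apply lsum_ext; intros yp Hyp.
  transitivity (lsum mu (fun xp => if R (fst yp) (fst xp) then snd xp else 0) * (snd yp * B (fst yp) / m (fst yp))).
  { rewrite <- lsum_scal_r. apply lsum_ext; intros xp _.
    assert (ES : R (fst xp) (fst yp) = R (fst yp) (fst xp)) by (unfold R; apply agree_sym).
    rewrite ES. destruct (R (fst yp) (fst xp)) eqn:E.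
    - rewrite (Hmeq (fst xp) (fst yp)) by exact ES. unfold Rdiv; ring.
    - ring. }
  fold (m (fst yp)).
  assert (Hq : snd yp <= m (fst yp)).
  { unfold m. assert (snd yp = (fun zp => if R (fst yp) (fst zp) then snd zp else 0) yp) by (simpl; unfold R; rewrite agree_refl; auto).
    rewrite H at 1. apply (lsum_single_le mu (fun zp => if R (fst yp) (fst zp) then snd zp else 0) yp); auto.
    intros b Hb. destruct (R (fst yp) (fst b)); [apply Hw; auto|lra]. }
  assert (0 <= snd yp) by (apply Hw; auto).
  destruct (Req_dec (m (fst yp)) 0) as [Hz|Hnz].
  - rewrite Hz. assert (snd yp = 0) by lra. rewrite H0. unfold Rdiv. ring.
  - field. auto.
Qed.

Definition isatom (mu : law) (y : nat -> R) := exists p, In (y, p) mu.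

Lemma exp_half_sq a : (exp (a / 2))^2 = exp a.
Proof. simpl. rewrite Rmult_1_r, <- exp_plus. f_equal. field. Qed.

Lemma exp_diff_sq a a' d : a' <= a -> a - a' <= d ->
  (exp (a / 2) - exp (a' / 2))^2 <= / 4 * d ^2 * exp a.
Proof.
  intros H1 H2.
  assert (E : exp (a' / 2) = exp (a / 2) * exp (a' / 2 - a / 2)) by (rewrite <- exp_plus; f_equal; ring).
  pose proof (exp_ge_1plus (a' / 2 - a / 2)).
  pose proof (exp_pos (a / 2)).
  assert (L : 0 <= exp (a / 2) - exp (a' / 2) <= (a - a') / 2 * exp (a / 2)).
  { split.
    - destruct (Req_dec a a') as [->|Hne]. lra. assert (exp (a'/2) < exp (a/2)) by (apply exp_increasing; lra). lra.
    - assert (P : 0 <= exp (a / 2) * (exp (a' / 2 - a / 2) - (1 + (a' / 2 - a / 2)))) by (apply Rmult_le_pos; lra).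
      rewrite E. nra. }
  rewrite <- (exp_half_sq a).
  assert ((exp (a / 2) - exp (a' / 2))^2 <= ((a - a') / 2 * exp (a / 2))^2).
  { apply pow_incr; auto. }
  assert (((a - a') / 2)^2 <= (d/2)^2) by (apply pow_incr; lra).
  assert (0 <= (exp (a/2))^2) by (apply pow2_ge_0).
  replace (/ 4 * d ^ 2 * exp (a / 2) ^ 2) with ((d/2)^2 * (exp (a/2))^2) by field.
  rewrite Rpow_mult_distr in H3. nra.
Qed.

Lemma GL (mu : law) (n : nat) (sigma2 : R) (u W : (nat -> R) -> R) :
  is_prob mu -> dLSI mu n sigma2 -> 0 <= sigma2 ->
  (forall x, u (trunc n x) = u x) ->
  (forall y, exists D : nat -> R, (forall i, 0 <= D i) /\ fsum n (fun i => D i ^2) * exp (u y) <= W y /\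
     (isatom mu y -> forall i, (i < n)%nat -> forall y', isatom mu y' -> agree_off n i y y' = true ->
        u y' <= u y -> u y - u y' <= D i)) ->
  Ent mu (fun x => exp (u x)) <= sigma2 / 2 * Ex mu W.
Proof.
  intros Hp HL Hs Hu HD.
  pose (Dc := fun y => proj1_sig (constructive_indefinite_description _ (HD y))).
  assert (HDc : forall y, (forall i, 0 <= Dc y i) /\ fsum n (fun i => Dc y i ^2) * exp (u y) <= W y /\
     (isatom mu y -> forall i, (i < n)%nat -> forall y', isatom mu y' -> agree_off n i y y' = true ->
        u y' <= u y -> u y - u y' <= Dc y i)).
  { intros y. unfold Dc. destruct (constructive_indefinite_description _ (HD y)); simpl; auto. }
  pose (B := fun i y => / 4 * (Dc y i)^2 * exp (u y)).
  pose (Gf := fun x => exp (u x / 2)).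
  specialize (HL Gf).
  assert (E1 : (fun x => (Gf (trunc n x))^2) = (fun x => exp (u x))).
  { apply functional_extensionality; intro x. unfold Gf. rewrite Hu. apply exp_half_sq. }
  assert (E2 : (fun x => Gf (trunc n x)) = Gf).
  { apply functional_extensionality; intro x. unfold Gf. rewrite Hu. auto. }
  rewrite E1, E2 in HL.
  assert (Hw := prob_wnn mu Hp).
  assert (Hi : forall i, (i < n)%nat -> Ex mu (dsq mu n i Gf) <= Ex mu (B i)).
  { intros i Hin. rewrite <- (same_law mu n i (B i) Hw).
    apply Ex_le; auto. intros xp Hxp. unfold dsq. cbv zeta.
    set (x := fst xp).
    apply var_bound.
    - intros yp Hyp. unfold cond_atoms in Hyp. apply filter_In in Hyp. apply Hw; tauto.
    - intros yp _. unfold B. pose proof (exp_pos (u (fst yp))). pose proof (pow2_ge_0 (Dc (fst yp) i)). nra.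
    - intros yp yp' Hyp Hyp'. unfold cond_atoms in Hyp, Hyp'. apply filter_In in Hyp, Hyp'.
      destruct Hyp as [Hyp Ha]. destruct Hyp' as [Hyp' Ha'].
      rewrite !trunc_upd_agree by auto. unfold Gf. rewrite !Hu.
      assert (Hyy : agree_off n i (fst yp) (fst yp') = true).
      { apply (agree_trans n i _ x); auto. rewrite agree_sym; auto. }
      assert (At : isatom mu (fst yp)) by (exists (snd yp); rewrite <- surjective_pairing; auto).
      assert (At' : isatom mu (fst yp')) by (exists (snd yp'); rewrite <- surjective_pairing; auto).
      assert (0 <= B i (fst yp)) by (unfold B; pose proof (exp_pos (u (fst yp))); pose proof (pow2_ge_0 (Dc (fst yp) i)); nra).
      assert (0 <= B i (fst yp')) by (unfold B; pose proof (exp_pos (u (fst yp'))); pose proof (pow2_ge_0 (Dc (fst yp') i)); nra).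
      destruct (Rle_dec (u (fst yp')) (u (fst yp))) as [Hle|Hgt].
      + assert ((exp (u (fst yp) / 2) - exp (u (fst yp') / 2))^2 <= B i (fst yp)).
        { apply exp_diff_sq; auto. apply (proj2 (proj2 (HDc (fst yp)))); auto. }
        lra.
      + assert ((exp (u (fst yp') / 2) - exp (u (fst yp) / 2))^2 <= B i (fst yp')).
        { apply exp_diff_sq; [lra|]. apply (proj2 (proj2 (HDc (fst yp')))); auto. rewrite agree_sym; auto. lra. }
        replace ((exp (u (fst yp) / 2) - exp (u (fst yp') / 2))^2) with ((exp (u (fst yp') / 2) - exp (u (fst yp) / 2))^2) by ring.
        lra. }
  assert (HS : Ex mu (dnorm2 mu n Gf) <= / 4 * Ex mu W).
  { unfold dnorm2. rewrite Ex_fsum.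
    transitivity (fsum n (fun i => Ex mu (B i))). apply fsum_le; auto.
    rewrite <- Ex_fsum. rewrite <- Ex_scal. apply Ex_le; auto. intros xp _.
    unfold B. rewrite (fsum_ext n _ (fun i => (/4 * exp (u (fst xp))) * Dc (fst xp) i ^2)) by (intros; ring).
    rewrite fsum_scal. destruct (HDc (fst xp)) as [_ [H _]]. nra. }
  unfold Rdiv. nra.
Qed.

Lemma Rsup_lub E : bound E -> (exists x, E x) -> is_lub E (Rsup E).
Proof.
  intros Hb Hne. unfold Rsup. destruct (excluded_middle_informative (exists l, is_lub E l)) as [h|h].
  - destruct (constructive_indefinite_description _ h); simpl; auto.
  - exfalso. apply h. destruct (completeness E Hb Hne) as [m Hm]. eauto.
Qed.
Lemma Rsup_ge E r : bound E -> E r -> r <= Rsup E.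
Proof. intros Hb Hr. apply (Rsup_lub E Hb (ex_intro _ r Hr)); auto. Qed.
Lemma Rsup_le E M : (exists x, E x) -> (forall r, E r -> r <= M) -> Rsup E <= M.
Proof. intros Hne H. assert (Hb : bound E) by (exists M; exact H). apply (Rsup_lub E Hb Hne). exact H. Qed.
Lemma Rsup_approx E eps : bound E -> (exists x, E x) -> 0 < eps -> exists r, E r /\ Rsup E - eps < r.
Proof.
  intros Hb Hne He. apply NNPP; intro H.
  assert (Hub : is_upper_bound E (Rsup E - eps)).
  { intros r Hr. apply Rnot_lt_le. intro Hlt. apply H. exists r; auto. }
  pose proof (proj2 (Rsup_lub E Hb Hne) _ Hub). lra.
Qed.
Lemma Rsup_nonneg E : (exists x, E x /\ 0 <= x) -> 0 <= Rsup E.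
Proof.
  intros [x [Hx Hx0]]. unfold Rsup. destruct (excluded_middle_informative (exists l, is_lub E l)) as [h|h]; [|lra].
  destruct (constructive_indefinite_description _ h) as [l Hl]; simpl. pose proof (proj1 Hl x Hx). lra.
Qed.
Lemma Rsup_ext E F : (forall r, E r <-> F r) -> Rsup E = Rsup F.
Proof. intros H. f_equal. apply functional_extensionality; intro r. apply propositional_extensionality; auto. Qed.

Lemma nat_unbounded r : exists k : nat, r < INR k.
Proof.
  destruct (archimed (Rabs r)) as [H1 _].
  assert (Hz : (0 < up (Rabs r))%Z) by (apply lt_0_IZR; pose proof (Rabs_pos r); lra).
  exists (Z.to_nat (up (Rabs r))). rewrite INR_IZR_INZ, Z2Nat.id by lia. pose proof (Rle_abs r). lra.
Qed.
Lemma fsum_abs n f : Rabs (fsum n f) <= fsum n (fun i => Rabs (f i)).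
Proof. induction n. rewrite !fsum_0, Rabs_R0; lra.
  rewrite !fsum_S. eapply Rle_trans. apply Rabs_triang. lra. Qed.
Lemma sq_le_of_abs a b : Rabs a <= b -> a ^ 2 <= b ^ 2.
Proof. intros H. rewrite <- pow2_abs. pose proof (Rabs_pos a). nra. Qed.

Lemma fold_Rmax_le l B : 0 <= B -> (forall a, In a l -> a <= B) -> fold_right Rmax 0 l <= B.
Proof. induction l; intros HB H; simpl; auto. apply Rmax_lub. apply H; simpl; auto. apply IHl; auto. intros; apply H; simpl; auto. Qed.
Lemma fold_Rmax_ge l a : In a l -> a <= fold_right Rmax 0 l.
Proof. induction l; intros Ha; [inversion Ha|]. simpl. destruct Ha as [<-|Ha]. apply Rmax_l.
  eapply Rle_trans. apply IHl; auto. apply Rmax_r. Qed.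
Lemma fold_Rmax_nonneg l : 0 <= fold_right Rmax 0 l.
Proof. induction l; simpl. lra. eapply Rle_trans. apply IHl. apply Rmax_r. Qed.

Lemma fdist_ge {V : Banach} n (t s : bfamily V) i j : (i < j)%nat -> (j < n)%nat ->
  vnorm (vadd (t i j) (vopp (s i j))) <= fdist n t s.
Proof. intros Hij Hjn. unfold fdist. apply fold_Rmax_ge. apply in_flat_map. exists i. split.
  apply in_seq; lia. apply in_map_iff. exists j. split; auto. apply in_seq; lia. Qed.
Lemma fdist_le {V : Banach} n (t s : bfamily V) B : 0 <= B ->
  (forall i j, (i < j)%nat -> (j < n)%nat -> vnorm (vadd (t i j) (vopp (s i j))) <= B) -> fdist n t s <= B.
Proof. intros HB H. unfold fdist. apply fold_Rmax_le; auto. intros a Ha.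
  apply in_flat_map in Ha. destruct Ha as [i [Hi Ha]]. apply in_map_iff in Ha. destruct Ha as [j [<- Hj]].
  apply in_seq in Hi, Hj. apply H; lia. Qed.
Lemma fdist_nonneg {V : Banach} n (t s : bfamily V) : 0 <= fdist n t s.
Proof. apply fold_Rmax_nonneg. Qed.

Lemma vopp_zero (V : Banach) : vopp (@vzero V) = vzero.
Proof. rewrite vopp_scal. apply vscal_zero. Qed.

Lemma compact_bounded {V : Banach} n (T : bfamily V -> Prop) :
  fcompact n T -> (exists t, T t) ->
  exists Kb, 0 <= Kb /\ forall t, T t -> forall i j, (i < j)%nat -> (j < n)%nat -> vnorm (t i j) <= Kb.
Proof.
  intros Hc [t0 Ht0].
  destruct (Hc nat (fun k s => fdist n t0 s < INR k)) as [l Hl].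
  - intros k t Ht. exists (INR k - fdist n t0 t). split; [lra|].
    intros s Hs. eapply Rle_lt_trans; [|instantiate (1 := fdist n t0 t + fdist n t s); lra].
    apply fdist_le. pose proof (fdist_nonneg n t0 t); pose proof (fdist_nonneg n t s); lra.
    intros i j Hij Hjn. eapply Rle_trans. apply (vnorm_triang_sub _ (t i j)).
    pose proof (fdist_ge n t0 t i j Hij Hjn). pose proof (fdist_ge n t s i j Hij Hjn). lra.
  - intros t _. destruct (nat_unbounded (fdist n t0 t)) as [k Hk]. exists k; auto.
  - set (K := fold_right Rmax 0 (map INR l)).
    set (B0 := fdist n t0 (fun _ _ => vzero)).
    exists (B0 + K). split. pose proof (fold_Rmax_nonneg (map INR l)). pose proof (fdist_nonneg n t0 (fun _ _ => vzero)). unfold K, B0. lra.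
    intros t Ht i j Hij Hjn.
    destruct (Hl t Ht) as [k [Hk Hkt]].
    assert (INR k <= K) by (apply fold_Rmax_ge, in_map; auto).
    pose proof (fdist_ge n t0 t i j Hij Hjn).
    pose proof (fdist_ge n t0 (fun _ _ => vzero) i j Hij Hjn) as Hz0. simpl in Hz0. rewrite vopp_zero, vadd_0r in Hz0.
    pose proof (vnorm_le_sub (t i j) (t0 i j)) as Hs. rewrite vnorm_sub_sym in Hs. unfold B0 in *. lra.
Qed.

Lemma phi_zero {V : Banach} (phi : V -> R) : dual_ball phi -> phi vzero = 0.
Proof. intros [Ha _]. pose proof (Ha vzero vzero). rewrite vadd_0 in H. lra. Qed.
Lemma phi_vsum {V : Banach} (phi : V -> R) n f : dual_ball phi -> phi (vsum n f) = fsum n (fun i => phi (f i)).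
Proof. intros Hp. induction n. unfold vsum; simpl. rewrite fsum_0. apply phi_zero; auto.
  rewrite vsum_S, fsum_S, (proj1 Hp), IHn. reflexivity. Qed.
Lemma phi_le {V : Banach} (phi : V -> R) x : dual_ball phi -> phi x <= vnorm x.
Proof. intros [_ [_ H]]. pose proof (H x). pose proof (Rle_abs (phi x)). lra. Qed.
Lemma phi_abs {V : Banach} (phi : V -> R) x : dual_ball phi -> Rabs (phi x) <= vnorm x.
Proof. intros [_ [_ H]]. auto. Qed.
Lemma zero_dual (V : Banach) : dual_ball (fun _ : V => 0).
Proof. split; [|split]; intros; try ring. rewrite Rabs_R0. apply vnorm_nonneg. Qed.

Lemma text_sym {V : Banach} (t : bfamily V) i j : text t i j = text t j i.
Proof. unfold text. destruct (Nat.ltb_spec i j), (Nat.ltb_spec j i); auto; lia. Qed.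

Definition Qv {V : Banach} n (t : bfamily V) (x : nat -> R) : V :=
  vsum n (fun i => vsum n (fun j => if Nat.ltb i j then vscal (x i * x j) (t i j) else vzero)).
Definition fset {V : Banach} n (T : bfamily V -> Prop) x := fun r => exists t, T t /\ r = vnorm (Qv n t x).
Definition hset {V : Banach} n (T : bfamily V -> Prop) (x : nat -> R) := fun r => exists t phi, T t /\ dual_ball phi /\
  r = sqrt (fsum n (fun i => (fsum n (fun j => x j * phi (text t i j)))^2)).
Definition hfun {V : Banach} n (T : bfamily V -> Prop) x := Rsup (hset n T x).
Definition opset n (M : nat -> nat -> R) := fun r => exists u : nat -> R, fsum n (fun j => (u j)^2) <= 1 /\
  r = sqrt (fsum n (fun i => (fsum n (fun j => M i j * u j))^2)).
Definition T2set {V : Banach} n (T : bfamily V -> Prop) := fun r => exists t phi, T t /\ dual_ball phi /\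
  r = opnorm n (fun i j => phi (text t i j)).

Lemma fT_eq {V : Banach} n (T : bfamily V -> Prop) x : fT n T x = Rsup (fset n T x).
Proof. reflexivity. Qed.
Lemma T1_eq {V : Banach} mu n (T : bfamily V -> Prop) : T1 mu n T = Ex mu (hfun n T).
Proof. reflexivity. Qed.
Lemma T2_eq {V : Banach} n (T : bfamily V -> Prop) : T2 n T = Rsup (T2set n T).
Proof. reflexivity. Qed.
Lemma opnorm_eq n M : opnorm n M = Rsup (opset n M).
Proof. reflexivity. Qed.

Definition Kbound {V : Banach} n (T : bfamily V -> Prop) Kb :=
  forall t, T t -> forall i j, (i < j)%nat -> (j < n)%nat -> vnorm (t i j) <= Kb.

Lemma text_bound {V : Banach} n (T : bfamily V -> Prop) Kb t i j : 0 <= Kb -> Kbound n T Kb -> T t ->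
  (i < n)%nat -> (j < n)%nat -> vnorm (text t i j) <= Kb.
Proof. intros HK0 HK Ht Hi Hj. unfold text. destruct (Nat.ltb_spec i j). apply HK; auto.
  destruct (Nat.ltb_spec j i). apply HK; auto. rewrite vnorm_zero; auto. Qed.

Lemma fset_bound {V : Banach} n (T : bfamily V -> Prop) Kb x : 0 <= Kb -> Kbound n T Kb -> bound (fset n T x).
Proof.
  intros HK0 HK. exists (fsum n (fun i => fsum n (fun j => Rabs (x i) * Rabs (x j) * Kb))).
  intros r [t [Ht ->]]. unfold Qv. eapply Rle_trans. apply vnorm_vsum. apply fsum_le; intros i Hi.
  eapply Rle_trans. apply vnorm_vsum. apply fsum_le; intros j Hj.
  destruct (Nat.ltb_spec i j).
  - rewrite vnorm_scal, Rabs_mult. apply Rmult_le_compat_l. apply Rmult_le_pos; apply Rabs_pos. apply HK; auto.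
  - rewrite vnorm_zero. apply Rmult_le_pos; auto. apply Rmult_le_pos; apply Rabs_pos.
Qed.
Lemma fset_ne {V : Banach} n (T : bfamily V -> Prop) x : (exists t, T t) -> exists r, fset n T x r.
Proof. intros [t Ht]. exists (vnorm (Qv n t x)), t; auto. Qed.

Lemma hset_bound {V : Banach} n (T : bfamily V -> Prop) Kb x : 0 <= Kb -> Kbound n T Kb -> bound (hset n T x).
Proof.
  intros HK0 HK. exists (sqrt (fsum n (fun i => (fsum n (fun j => Rabs (x j) * Kb))^2))).
  intros r [t [phi [Ht [Hphi ->]]]]. apply sqrt_le_1_alt. apply fsum_le; intros i Hi.
  apply sq_le_of_abs. eapply Rle_trans. apply fsum_abs. apply fsum_le; intros j Hj.
  rewrite Rabs_mult. apply Rmult_le_compat_l. apply Rabs_pos.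
  eapply Rle_trans. apply phi_abs; auto. apply (text_bound n T); auto.
Qed.
Lemma hset_ne {V : Banach} n (T : bfamily V -> Prop) x : (exists t, T t) -> exists r, hset n T x r.
Proof. intros [t Ht]. eexists. exists t, (fun _ => 0). split; auto. split. apply zero_dual. reflexivity. Qed.
Lemma hfun_nonneg {V : Banach} n (T : bfamily V -> Prop) x : (exists t, T t) -> 0 <= hfun n T x.
Proof. intros [t Ht]. apply Rsup_nonneg. eexists. split. exists t, (fun _ => 0). split; auto. split. apply zero_dual. reflexivity.
  apply sqrt_pos. Qed.

Lemma opset_elem_le n (M B : nat -> nat -> R) u : fsum n (fun j => (u j)^2) <= 1 ->
  (forall i j, (i < n)%nat -> (j < n)%nat -> Rabs (M i j) <= B i j) ->
  sqrt (fsum n (fun i => (fsum n (fun j => M i j * u j))^2)) <= sqrt (fsum n (fun i => (fsum n (fun j => B i j))^2)).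
Proof.
  intros Hu HB. apply sqrt_le_1_alt. apply fsum_le; intros i Hi.
  apply sq_le_of_abs. eapply Rle_trans. apply fsum_abs. apply fsum_le; intros j Hj.
  rewrite Rabs_mult. assert (Rabs (u j) <= 1).
  { assert (u j ^ 2 <= 1).
    { eapply Rle_trans; [|exact Hu]. apply (fsum_single_le n (fun j => u j ^2) j); auto. intros; apply pow2_ge_0. }
    rewrite <- pow2_abs in H. pose proof (Rabs_pos (u j)). nra. }
  pose proof (HB i j Hi Hj). pose proof (Rabs_pos (M i j)). pose proof (Rabs_pos (u j)). nra.
Qed.
Lemma opset_bound n M : bound (opset n M).
Proof.
  exists (sqrt (fsum n (fun i => (fsum n (fun j => Rabs (M i j)))^2))).
  intros r [u [Hu ->]]. apply opset_elem_le; auto. intros; lra.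
Qed.
Lemma opset_ne n M : exists r, opset n M r.
Proof. eexists. exists (fun _ => 0). split; [|reflexivity]. rewrite (fsum_ext n _ (fun _ => 0)). rewrite fsum_const; lra.
  intros; simpl; ring. Qed.
Lemma opnorm_ge n M u : fsum n (fun j => (u j)^2) <= 1 ->
  sqrt (fsum n (fun i => (fsum n (fun j => M i j * u j))^2)) <= opnorm n M.
Proof. intros H. rewrite opnorm_eq. apply Rsup_ge. apply opset_bound. exists u; auto. Qed.
Lemma opnorm_nonneg n M : 0 <= opnorm n M.
Proof. rewrite opnorm_eq. destruct (opset_ne n M) as [r Hr]. apply Rsup_nonneg. exists r. split; auto.
  destruct Hr as [u [_ ->]]. apply sqrt_pos. Qed.

Lemma T2set_bound {V : Banach} n (T : bfamily V -> Prop) Kb : 0 <= Kb -> Kbound n T Kb -> bound (T2set n T).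
Proof.
  intros HK0 HK. exists (sqrt (fsum n (fun i => (fsum n (fun j => Kb))^2))).
  intros r [t [phi [Ht [Hphi ->]]]]. rewrite opnorm_eq. apply Rsup_le. apply opset_ne.
  intros r [u [Hu ->]]. apply opset_elem_le; auto. intros i j Hi Hj.
  eapply Rle_trans. apply phi_abs; auto. apply (text_bound n T); auto.
Qed.
Lemma T2_ge {V : Banach} n (T : bfamily V -> Prop) Kb t phi : 0 <= Kb -> Kbound n T Kb -> T t -> dual_ball phi ->
  opnorm n (fun i j => phi (text t i j)) <= T2 n T.
Proof. intros HK0 HK Ht Hp. rewrite T2_eq. apply Rsup_ge. eapply T2set_bound; eauto. exists t, phi; auto. Qed.
Lemma T2_nonneg {V : Banach} n (T : bfamily V -> Prop) : (exists t, T t) -> 0 <= T2 n T.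
Proof. intros [t Ht]. rewrite T2_eq. apply Rsup_nonneg. eexists. split. exists t, (fun _ => 0). split; auto. split. apply zero_dual. reflexivity.
  apply opnorm_nonneg. Qed.

Lemma fsum_single n i0 F : (i0 < n)%nat -> (forall j, (j < n)%nat -> j <> i0 -> F j = 0) -> fsum n F = F i0.
Proof. intros Hi H. rewrite (fsum_ext n F (fun j => if Nat.eqb j i0 then F j else 0)).
  apply fsum_delta; auto. intros j Hj. destruct (Nat.eqb_spec j i0); auto. Qed.

Lemma quad_phi {V : Banach} n (t : bfamily V) x phi : dual_ball phi ->
  phi (Qv n t x) = fsum n (fun i => fsum n (fun j => if Nat.ltb i j then x i * x j * phi (t i j) else 0)).
Proof.
  intros Hp. unfold Qv. rewrite phi_vsum by auto. apply fsum_ext; intros i Hi. rewrite phi_vsum by auto.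
  apply fsum_ext; intros j Hj. destruct (Nat.ltb i j). apply (proj1 (proj2 Hp)). apply phi_zero; auto.
Qed.

Lemma quad_diff n i0 (x y : nat -> R) (P : nat -> nat -> R) : (i0 < n)%nat ->
  (forall j, (j < n)%nat -> j <> i0 -> y j = x j) ->
  fsum n (fun i => fsum n (fun j => if Nat.ltb i j then x i * x j * P i j else 0)) -
  fsum n (fun i => fsum n (fun j => if Nat.ltb i j then y i * y j * P i j else 0)) =
  (x i0 - y i0) * fsum n (fun j => x j * (if Nat.ltb i0 j then P i0 j else if Nat.ltb j i0 then P j i0 else 0)).
Proof.
  intros Hi0 Hy. set (d := x i0 - y i0).
  rewrite <- fsum_minus.
  rewrite (fsum_ext n _ (fun i => fsum n (fun j => (if Nat.eqb i i0 then d * (if Nat.ltb i j then x j * P i j else 0) else 0)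
                                               + (if Nat.eqb j i0 then d * (if Nat.ltb i j then x i * P i j else 0) else 0)))).
  2:{ intros i Hi. rewrite <- fsum_minus. apply fsum_ext; intros j Hj. unfold d.
      destruct (Nat.eqb_spec i i0) as [->|Hne1]; destruct (Nat.eqb_spec j i0) as [->|Hne2].
      - rewrite Nat.ltb_irrefl. ring.
      - rewrite (Hy j) by auto. destruct (Nat.ltb i0 j); ring.
      - rewrite (Hy i) by auto. destruct (Nat.ltb i i0); ring.
      - rewrite (Hy i), (Hy j) by auto. destruct (Nat.ltb i j); ring. }
  rewrite (fsum_ext n _ (fun i => (if Nat.eqb i i0 then fsum n (fun j => d * (if Nat.ltb i j then x j * P i j else 0)) else 0)
                                + d * (if Nat.ltb i i0 then x i * P i i0 else 0))).
  2:{ intros i Hi. rewrite fsum_plus. f_equal.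
      - destruct (Nat.eqb i i0); auto. rewrite fsum_const; ring.
      - apply (fsum_delta n i0 (fun j => d * (if Nat.ltb i j then x i * P i j else 0))); auto. }
  rewrite fsum_plus. rewrite (fsum_delta n i0 (fun i => fsum n (fun j => d * (if Nat.ltb i j then x j * P i j else 0)))) by auto.
  rewrite <- fsum_plus, <- fsum_scal. apply fsum_ext; intros j Hj.
  destruct (Nat.ltb_spec i0 j), (Nat.ltb_spec j i0); try lia; ring.
Qed.

Lemma phi_text {V : Banach} (phi : V -> R) t i j : dual_ball phi ->
  phi (text t i j) = if Nat.ltb i j then phi (t i j) else if Nat.ltb j i then phi (t j i) else 0.
Proof. intros Hp. unfold text. destruct (Nat.ltb i j); auto. destruct (Nat.ltb j i); auto. apply phi_zero; auto. Qed.

Lemma grad_f {V : Banach} n (T : bfamily V -> Prop) Kb (x : nat -> R) eps :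
  0 <= Kb -> Kbound n T Kb -> (exists t, T t) -> 0 < eps ->
  exists g : nat -> R, fsum n (fun i => g i ^2) <= (hfun n T x)^2 /\
    forall i, (i < n)%nat -> forall y, (forall j, (j < n)%nat -> j <> i -> y j = x j) ->
      fT n T x - fT n T y <= (x i - y i) * g i + eps.
Proof.
  intros HK0 HK Hne He.
  destruct (Rsup_approx (fset n T x) eps (fset_bound n T Kb x HK0 HK) (fset_ne n T x Hne) He) as [r [[t [Ht ->]] Hr]].
  destruct (hahn_banach V (Qv n t x)) as [phi [Hphi Hphiv]].
  exists (fun i => fsum n (fun j => x j * phi (text t i j))). split.
  - set (s := sqrt (fsum n (fun i => (fsum n (fun j => x j * phi (text t i j)))^2))).
    assert (Hs : s <= hfun n T x) by (apply Rsup_ge; [apply (hset_bound n T Kb); auto|]; exists t, phi; auto).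
    assert (Hs0 : 0 <= s) by apply sqrt_pos.
    assert (E : fsum n (fun i => (fsum n (fun j => x j * phi (text t i j)))^2) = s ^ 2).
    { unfold s. simpl. rewrite Rmult_1_r, sqrt_sqrt; auto. apply fsum_nonneg; intros; apply pow2_ge_0. }
    rewrite E. apply pow_incr; auto.
  - intros i Hi y Hy.
    assert (Hfy : vnorm (Qv n t y) <= fT n T y) by (rewrite fT_eq; apply Rsup_ge; [apply (fset_bound n T Kb); auto|exists t; auto]).
    pose proof (phi_le phi (Qv n t y) Hphi).

    assert (E : phi (Qv n t x) - phi (Qv n t y) = (x i - y i) * fsum n (fun j => x j * phi (text t i j))).
    { rewrite !quad_phi by auto. rewrite (quad_diff n i); auto. f_equal. apply fsum_ext; intros j Hj. rewrite phi_text; auto. }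
    rewrite !fT_eq in *. lra.
Qed.

Lemma grad_h {V : Banach} n (T : bfamily V -> Prop) Kb (x : nat -> R) eps :
  0 <= Kb -> Kbound n T Kb -> (exists t, T t) -> 0 < eps ->
  exists g : nat -> R, fsum n (fun i => g i ^2) <= (T2 n T)^2 /\
    forall i, (i < n)%nat -> forall y, (forall j, (j < n)%nat -> j <> i -> y j = x j) ->
      hfun n T x - hfun n T y <= (x i - y i) * g i + eps.
Proof.
  intros HK0 HK Hne He.
  destruct (Rsup_approx (hset n T x) eps (hset_bound n T Kb x HK0 HK) (hset_ne n T x Hne) He) as [r [[t [phi [Ht [Hphi ->]]]] Hr]].
  fold (hfun n T x) in Hr.
  set (w := fun i => fsum n (fun j => x j * phi (text t i j))).
  set (r := sqrt (fsum n (fun i => w i ^ 2))).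
  assert (Hr0 : 0 <= r) by apply sqrt_pos.
  assert (Hrr : r ^ 2 = fsum n (fun i => w i ^ 2)).
  { unfold r. simpl. rewrite Rmult_1_r, sqrt_sqrt; auto. apply fsum_nonneg; intros; apply pow2_ge_0. }
  destruct (Rle_lt_or_eq_dec 0 r Hr0) as [Hrp|Hrz].
  2:{ exists (fun _ => 0). split.
      - rewrite (fsum_ext n _ (fun _ => 0)) by (intros; ring). rewrite fsum_const. pose proof (pow2_ge_0 (T2 n T)). lra.
      - intros i Hi y Hy. pose proof (hfun_nonneg n T y Hne). unfold r in Hrz. unfold w in Hrz. rewrite <- Hrz in Hr. lra. }
  set (u := fun k => w k / r).
  set (g := fun i => fsum n (fun j => phi (text t i j) * u j)).
  assert (Hu : fsum n (fun j => u j ^ 2) = 1).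
  { unfold u. rewrite (fsum_ext n _ (fun j => / r ^ 2 * w j ^ 2)) by (intros; field; lra).
    rewrite fsum_scal, <- Hrr. field. lra. }
  exists g. split.
  - assert (Hg : sqrt (fsum n (fun i => g i ^ 2)) <= T2 n T).
    { eapply Rle_trans. { apply (opnorm_ge n (fun i j => phi (text t i j)) u). rewrite Hu; lra. } apply (T2_ge n T Kb); auto. }
    assert (Hg0 : 0 <= sqrt (fsum n (fun i => g i ^ 2))) by apply sqrt_pos.
    rewrite <- (sqrt_sqrt (fsum n (fun i => g i ^ 2))) by (apply fsum_nonneg; intros; apply pow2_ge_0).
    replace (sqrt (fsum n (fun i => g i ^ 2)) * sqrt (fsum n (fun i => g i ^ 2))) with ((sqrt (fsum n (fun i => g i ^ 2)))^2) by ring.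
    apply pow_incr; auto.
  - intros i Hi y Hy.
    set (w' := fun i => fsum n (fun j => y j * phi (text t i j))).
    assert (Hhy : sqrt (fsum n (fun i => w' i ^ 2)) <= hfun n T y).
    { apply Rsup_ge. apply (hset_bound n T Kb); auto. exists t, phi; auto. }
    assert (HCS : fsum n (fun k => u k * w' k) <= sqrt (fsum n (fun i => w' i ^ 2))).
    { eapply Rle_trans. apply fsum_CS_sqrt. rewrite Hu, sqrt_1. lra. }
    assert (Huw : fsum n (fun k => u k * w k) = r).
    { unfold u. rewrite (fsum_ext n _ (fun k => / r * w k ^ 2)) by (intros; field; lra).
      rewrite fsum_scal, <- Hrr. field. lra. }
    assert (Hdiff : fsum n (fun k => u k * w k) - fsum n (fun k => u k * w' k) = (x i - y i) * g i).
    { rewrite <- fsum_minus.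
      rewrite (fsum_ext n _ (fun k => (x i - y i) * (phi (text t i k) * u k))).
      - rewrite fsum_scal. reflexivity.
      - intros k Hk. unfold w, w'. rewrite <- Rmult_minus_distr_l, <- fsum_minus.
        rewrite (fsum_single n i (fun j => x j * phi (text t k j) - y j * phi (text t k j))); auto.
        rewrite text_sym. ring.
        intros j Hj Hji. rewrite Hy; auto. ring. }
    unfold r, w in *. lra.
Qed.

Lemma fT_trunc {V : Banach} n (T : bfamily V -> Prop) x : fT n T (trunc n x) = fT n T x.
Proof.
  rewrite !fT_eq. apply Rsup_ext. intros r. unfold fset.
  assert (E : forall t : bfamily V, Qv n t (trunc n x) = Qv n t x).
  { intros t. unfold Qv. apply vsum_ext; intros i Hi. apply vsum_ext; intros j Hj. unfold trunc.
    destruct (Nat.ltb_spec i n), (Nat.ltb_spec j n); try lia. reflexivity. }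
  split; intros [t [Ht Hr]]; exists t; rewrite ?E in *; auto.
Qed.

Lemma hfun_trunc {V : Banach} n (T : bfamily V -> Prop) x : hfun n T (trunc n x) = hfun n T x.
Proof.
  unfold hfun. apply Rsup_ext. intros r. unfold hset.
  assert (E : forall t (phi : V -> R), fsum n (fun i => (fsum n (fun j => trunc n x j * phi (text t i j)))^2) =
                                        fsum n (fun i => (fsum n (fun j => x j * phi (text t i j)))^2)).
  { intros t phi. apply fsum_ext; intros i Hi. f_equal. apply fsum_ext; intros j Hj. unfold trunc.
    destruct (Nat.ltb_spec j n); try lia. reflexivity. }
  split; intros [t [phi [Ht [Hp Hr]]]]; exists t, phi; rewrite ?E in *; auto.
Qed.

Lemma eps_le X Y K : (forall eps, 0 < eps <= 1 -> X <= Y + eps * K) -> X <= Y.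
Proof.
  intros H. destruct (Rle_or_lt K 0) as [HK|HK].
  - pose proof (H 1 ltac:(lra)). lra.
  - apply Rnot_lt_le; intro Hc.
    set (e := Rmin 1 ((X - Y) / (2 * K))).
    assert (He : 0 < e <= 1).
    { unfold e. split. apply Rmin_pos. lra. apply Rdiv_lt_0_compat; lra. apply Rmin_l. }
    pose proof (H e He).
    assert (e * K <= (X - Y) / 2).
    { assert (e <= (X - Y) / (2 * K)) by apply Rmin_r.
      apply (Rmult_le_compat_r K) in H1; [|lra]. replace ((X - Y) / (2 * K) * K) with ((X - Y) / 2) in H1 by (field; lra). lra. }
    lra.
Qed.

Lemma GL2 (mu : law) (n : nat) (s2 : R) (u P Q : (nat -> R) -> R) :
  is_prob mu -> dLSI mu n s2 -> 0 <= s2 ->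
  (forall x, u (trunc n x) = u x) ->
  (forall eps, 0 < eps <= 1 -> forall y, exists D : nat -> R, (forall i, 0 <= D i) /\
     fsum n (fun i => D i ^2) <= P y + eps * Q y /\
     (isatom mu y -> forall i, (i < n)%nat -> forall y', isatom mu y' -> agree_off n i y y' = true ->
        u y' <= u y -> u y - u y' <= D i)) ->
  Ent mu (fun x => exp (u x)) <= s2 / 2 * Ex mu (fun x => P x * exp (u x)).
Proof.
  intros Hp HL Hs Hu HD.
  apply (eps_le _ _ (s2 / 2 * Ex mu (fun x => Q x * exp (u x)))).
  intros eps He.
  eapply Rle_trans. apply (GL mu n s2 u (fun y => (P y + eps * Q y) * exp (u y))); auto.
  - intros y. destruct (HD eps He y) as [D [HD0 [HD1 HD2]]]. exists D. split; auto. split; auto.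
    apply Rmult_le_compat_r; auto. left; apply exp_pos.
  - rewrite (Ex_ext mu _ (fun x => P x * exp (u x) + eps * (Q x * exp (u x)))) by (intros; ring).
    rewrite Ex_plus, Ex_scal. lra.
Qed.

Lemma sq_bound ba g eps : 0 < eps <= 1 -> 0 <= ba ->
  (ba * Rabs g + eps)^2 <= ba^2 * g^2 + eps * (ba^2 * g^2 + 2).
Proof.
  intros He Hba. rewrite <- (pow2_abs g). set (z := ba * Rabs g).
  assert (0 <= z) by (unfold z; apply Rmult_le_pos; auto; apply Rabs_pos).
  replace (ba ^ 2 * Rabs g ^ 2) with (z ^ 2) by (unfold z; ring).
  assert (2 * z <= z^2 + 1) by (pose proof (pow2_ge_0 (z - 1)); nra).
  assert (eps * (2*z) <= eps * (z^2+1)) by (apply Rmult_le_compat_l; lra).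
  assert (eps^2 <= eps) by (assert (0 <= eps * (1 - eps)) by (apply Rmult_le_pos; lra); nra).
  replace ((z+eps)^2) with (z^2 + eps*(2*z) + eps^2) by ring.
  replace (z ^ 2 + eps * (z ^ 2 + 2)) with (z^2 + eps*(z^2+1) + eps) by ring. lra.
Qed.

Lemma sum_sq_bound n ba (g : nat -> R) eps : 0 < eps <= 1 -> 0 <= ba ->
  fsum n (fun i => (ba * Rabs (g i) + eps)^2) <=
  ba^2 * fsum n (fun i => g i ^2) + eps * (ba^2 * fsum n (fun i => g i ^2) + 2 * INR n).
Proof.
  intros He Hba. eapply Rle_trans. apply fsum_le. intros i _. apply (sq_bound ba (g i) eps); auto.
  right. rewrite fsum_plus.
  rewrite (fsum_scal n eps (fun i => ba ^ 2 * g i ^ 2 + 2)).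
  rewrite (fsum_plus n (fun i => ba ^ 2 * g i ^ 2) (fun _ => 2)).
  rewrite (fsum_scal n (ba^2) (fun i => g i ^ 2)), fsum_const. ring.
Qed.


Lemma coord_diff mu n a b y y' i g : (forall xp, In xp mu -> forall i, (i < n)%nat -> a <= fst xp i <= b) ->
  isatom mu y -> isatom mu y' -> (i < n)%nat -> (y i - y' i) * g <= (b - a) * Rabs g.
Proof.
  intros Hs [p Hp] [p' Hp'] Hi. pose proof (Hs _ Hp i Hi). pose proof (Hs _ Hp' i Hi). simpl in *.
  eapply Rle_trans. apply Rle_abs. rewrite Rabs_mult. apply Rmult_le_compat_r. apply Rabs_pos.
  apply Rabs_le. lra.
Qed.

Lemma fsum_sq_scal n c (X : nat -> R) : fsum n (fun i => (c * X i)^2) = c^2 * fsum n (fun i => X i ^2).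
Proof. rewrite <- fsum_scal. apply fsum_ext; intros; ring. Qed.

Lemma entA {V : Banach} mu n a b s2 (T : bfamily V -> Prop) Kb lam :
  is_prob mu -> (forall xp, In xp mu -> forall i, (i < n)%nat -> a <= fst xp i <= b) -> a < b ->
  dLSI mu n s2 -> 0 <= s2 -> 0 <= Kb -> Kbound n T Kb -> (exists t, T t) -> 0 <= lam ->
  Ent mu (fun x => exp (lam * fT n T x)) <=
    s2 / 2 * Ex mu (fun x => (lam^2 * (b - a)^2 * hfun n T x ^2) * exp (lam * fT n T x)).
Proof.
  intros Hp Hs Hab HL Hs2 HK0 HK Hne Hl.
  apply (GL2 mu n s2 (fun x => lam * fT n T x) (fun y => lam^2 * (b - a)^2 * hfun n T y ^2)
           (fun y => lam^2 * ((b - a)^2 * hfun n T y ^2 + 2 * INR n))); auto.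
  - intros x. rewrite fT_trunc; auto.
  - intros eps He y. destruct (grad_f n T Kb y eps HK0 HK Hne (proj1 He)) as [g [Hg1 Hg2]].
    exists (fun i => lam * ((b - a) * Rabs (g i) + eps)). split; [|split].
    + intros i. apply Rmult_le_pos; auto. pose proof (Rabs_pos (g i)). nra.
    + rewrite fsum_sq_scal. eapply Rle_trans. apply Rmult_le_compat_l. apply pow2_ge_0.
      apply (sum_sq_bound n (b - a) g eps He). lra.
      assert (0 <= (b-a)^2) by apply pow2_ge_0. assert (0 <= lam ^ 2) by apply pow2_ge_0.
      assert ((b-a)^2 * fsum n (fun i => g i ^2) <= (b-a)^2 * hfun n T y ^2) by (apply Rmult_le_compat_l; auto).
      assert (lam^2 * ((b-a)^2 * fsum n (fun i => g i ^2)) <= lam^2 * ((b-a)^2 * hfun n T y ^2)) by (apply Rmult_le_compat_l; auto).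
      assert (eps * (lam^2 * ((b-a)^2 * fsum n (fun i => g i ^2))) <= eps * (lam^2 * ((b-a)^2 * hfun n T y ^2))) by (apply Rmult_le_compat_l; lra).
      replace (lam ^ 2 * ((b - a) ^ 2 * fsum n (fun i => g i ^ 2) + eps * ((b - a) ^ 2 * fsum n (fun i => g i ^ 2) + 2 * INR n)))
        with (lam^2 * ((b-a)^2 * fsum n (fun i => g i ^2)) + eps * (lam^2 * ((b-a)^2 * fsum n (fun i => g i ^2))) + eps * lam^2 * 2 * INR n) by ring.
      replace (lam ^ 2 * (b - a) ^ 2 * hfun n T y ^ 2 + eps * (lam ^ 2 * ((b - a) ^ 2 * hfun n T y ^ 2 + 2 * INR n)))
        with (lam^2 * ((b-a)^2 * hfun n T y ^2) + eps * (lam^2 * ((b-a)^2 * hfun n T y ^2)) + eps * lam^2 * 2 * INR n) by ring.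
      lra.
    + intros Hy i Hi y' Hy' Hag Hle. rewrite agree_spec in Hag.
      assert (H := Hg2 i Hi y' (fun j Hj Hji => eq_sym (Hag j Hj Hji))).
      pose proof (coord_diff mu n a b y y' i (g i) Hs Hy Hy' Hi).
      replace (lam * fT n T y - lam * fT n T y') with (lam * (fT n T y - fT n T y')) by ring.
      apply Rmult_le_compat_l; auto. lra.
Qed.

Lemma entB {V : Banach} mu n a b s2 (T : bfamily V -> Prop) Kb lam :
  is_prob mu -> (forall xp, In xp mu -> forall i, (i < n)%nat -> a <= fst xp i <= b) -> a < b ->
  dLSI mu n s2 -> 0 <= s2 -> 0 <= Kb -> Kbound n T Kb -> (exists t, T t) -> 0 <= lam ->
  Ent mu (fun x => exp (lam * hfun n T x)) <=
    s2 / 2 * Ex mu (fun x => (lam^2 * (b - a)^2 * T2 n T ^2) * exp (lam * hfun n T x)).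
Proof.
  intros Hp Hs Hab HL Hs2 HK0 HK Hne Hl.
  apply (GL2 mu n s2 (fun x => lam * hfun n T x) (fun y => lam^2 * (b - a)^2 * T2 n T ^2)
           (fun y => lam^2 * ((b - a)^2 * T2 n T ^2 + 2 * INR n))); auto.
  - intros x. rewrite hfun_trunc; auto.
  - intros eps He y. destruct (grad_h n T Kb y eps HK0 HK Hne (proj1 He)) as [g [Hg1 Hg2]].
    exists (fun i => lam * ((b - a) * Rabs (g i) + eps)). split; [|split].
    + intros i. apply Rmult_le_pos; auto. pose proof (Rabs_pos (g i)). nra.
    + rewrite fsum_sq_scal. eapply Rle_trans. apply Rmult_le_compat_l. apply pow2_ge_0.
      apply (sum_sq_bound n (b - a) g eps He). lra.
      set (G := fsum n (fun i => g i ^2)). set (H2 := T2 n T ^2).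
      assert (0 <= (b-a)^2) by apply pow2_ge_0. assert (0 <= lam ^ 2) by apply pow2_ge_0.
      assert ((b-a)^2 * G <= (b-a)^2 * H2) by (apply Rmult_le_compat_l; auto).
      assert (lam^2 * ((b-a)^2 * G) <= lam^2 * ((b-a)^2 * H2)) by (apply Rmult_le_compat_l; auto).
      assert (eps * (lam^2 * ((b-a)^2 * G)) <= eps * (lam^2 * ((b-a)^2 * H2))) by (apply Rmult_le_compat_l; lra).
      replace (lam ^ 2 * ((b - a) ^ 2 * G + eps * ((b - a) ^ 2 * G + 2 * INR n)))
        with (lam^2 * ((b-a)^2 * G) + eps * (lam^2 * ((b-a)^2 * G)) + eps * lam^2 * 2 * INR n) by ring.
      replace (lam ^ 2 * (b - a) ^ 2 * H2 + eps * (lam ^ 2 * ((b - a) ^ 2 * H2 + 2 * INR n)))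
        with (lam^2 * ((b-a)^2 * H2) + eps * (lam^2 * ((b-a)^2 * H2)) + eps * lam^2 * 2 * INR n) by ring.
      lra.
    + intros Hy i Hi y' Hy' Hag Hle. rewrite agree_spec in Hag.
      assert (H := Hg2 i Hi y' (fun j Hj Hji => eq_sym (Hag j Hj Hji))).
      pose proof (coord_diff mu n a b y y' i (g i) Hs Hy Hy' Hi).
      replace (lam * hfun n T y - lam * hfun n T y') with (lam * (hfun n T y - hfun n T y')) by ring.
      apply Rmult_le_compat_l; auto. lra.
Qed.

Lemma entC {V : Banach} mu n a b s2 (T : bfamily V -> Prop) Kb m0 :
  is_prob mu -> (forall xp, In xp mu -> forall i, (i < n)%nat -> a <= fst xp i <= b) -> a < b ->
  dLSI mu n s2 -> 0 <= s2 -> 0 <= Kb -> Kbound n T Kb -> (exists t, T t) -> 0 <= m0 ->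
  Ent mu (fun x => exp (m0 * (hfun n T x ^2))) <=
    s2 / 2 * Ex mu (fun x => (4 * m0^2 * (b - a)^2 * T2 n T ^2 * hfun n T x ^2) * exp (m0 * (hfun n T x ^2))).
Proof.
  intros Hp Hs Hab HL Hs2 HK0 HK Hne Hl.
  apply (GL2 mu n s2 (fun x => m0 * (hfun n T x ^2)) (fun y => 4 * m0^2 * (b - a)^2 * T2 n T ^2 * hfun n T y ^2)
           (fun y => 4 * m0^2 * hfun n T y ^2 * ((b - a)^2 * T2 n T ^2 + 2 * INR n))); auto.
  - intros x. rewrite hfun_trunc; auto.
  - intros eps He y. destruct (grad_h n T Kb y eps HK0 HK Hne (proj1 He)) as [g [Hg1 Hg2]].
    pose proof (hfun_nonneg n T y Hne) as Hh0.
    exists (fun i => (m0 * (2 * hfun n T y)) * ((b - a) * Rabs (g i) + eps)). split; [|split].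
    + intros i. apply Rmult_le_pos. apply Rmult_le_pos; lra. pose proof (Rabs_pos (g i)). nra.
    + rewrite fsum_sq_scal. eapply Rle_trans. apply Rmult_le_compat_l. apply pow2_ge_0.
      apply (sum_sq_bound n (b - a) g eps He). lra.
      set (G := fsum n (fun i => g i ^2)). set (H2 := T2 n T ^2). set (h := hfun n T y).
      assert (0 <= (b-a)^2) by apply pow2_ge_0. assert (0 <= (m0 * (2 * h)) ^ 2) by apply pow2_ge_0.
      assert ((b-a)^2 * G <= (b-a)^2 * H2) by (apply Rmult_le_compat_l; auto).
      assert ((m0 * (2 * h))^2 * ((b-a)^2 * G) <= (m0 * (2 * h))^2 * ((b-a)^2 * H2)) by (apply Rmult_le_compat_l; auto).
      assert (eps * ((m0 * (2 * h))^2 * ((b-a)^2 * G)) <= eps * ((m0 * (2 * h))^2 * ((b-a)^2 * H2))) by (apply Rmult_le_compat_l; lra).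
      replace ((m0 * (2 * h)) ^ 2 * ((b - a) ^ 2 * G + eps * ((b - a) ^ 2 * G + 2 * INR n)))
        with ((m0 * (2 * h))^2 * ((b-a)^2 * G) + eps * ((m0 * (2 * h))^2 * ((b-a)^2 * G)) + eps * (m0 * (2 * h))^2 * 2 * INR n) by ring.
      replace (4 * m0 ^ 2 * (b - a) ^ 2 * H2 * h ^ 2 + eps * (4 * m0 ^ 2 * h ^ 2 * ((b - a) ^ 2 * H2 + 2 * INR n)))
        with ((m0 * (2 * h))^2 * ((b-a)^2 * H2) + eps * ((m0 * (2 * h))^2 * ((b-a)^2 * H2)) + eps * (m0 * (2 * h))^2 * 2 * INR n) by ring.
      lra.
    + intros Hy i Hi y' Hy' Hag Hle. rewrite agree_spec in Hag.
      assert (H := Hg2 i Hi y' (fun j Hj Hji => eq_sym (Hag j Hj Hji))).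
      pose proof (coord_diff mu n a b y y' i (g i) Hs Hy Hy' Hi).
      pose proof (hfun_nonneg n T y' Hne) as Hh0'.
      set (h := hfun n T y) in *. set (h' := hfun n T y') in *.
      destruct (Req_dec m0 0) as [->|Hm0].
      * replace (0 * h ^ 2 - 0 * h' ^ 2) with 0 by ring. apply Rmult_le_pos. lra. pose proof (Rabs_pos (g i)). nra.
      * assert (Hhh : h' <= h).
        { apply Rnot_lt_le; intro Hc. assert (h ^ 2 < h' ^ 2) by (simpl; nra).
          assert (m0 * h^2 < m0 * h'^2) by (apply Rmult_lt_compat_l; lra). lra. }
        replace (m0 * h ^ 2 - m0 * h' ^ 2) with (m0 * ((h + h') * (h - h'))) by ring.
        rewrite Rmult_assoc. apply Rmult_le_compat_l; auto.
        assert ((h + h') * (h - h') <= (2 * h) * (h - h')) by (apply Rmult_le_compat_r; lra).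
        assert ((2 * h) * (h - h') <= (2 * h) * ((b - a) * Rabs (g i) + eps)) by (apply Rmult_le_compat_l; lra).
        lra.
Qed.

From Coquelicot Require Import Coquelicot.
Open Scope R_scope.

Lemma is_derive_eq (f : R -> R) (x l l' : R) : is_derive f x l -> l = l' -> is_derive f x l'.
Proof. intros H <-; auto. Qed.

Lemma d_plus (f g : R -> R) x a b : is_derive f x a -> is_derive g x b -> is_derive (fun t => f t + g t) x (a + b).
Proof. intros H1 H2. exact (is_derive_plus f g x a b H1 H2). Qed.
Lemma d_minus (f g : R -> R) x a b : is_derive f x a -> is_derive g x b -> is_derive (fun t => f t - g t) x (a - b).
Proof. intros H1 H2. exact (is_derive_minus f g x a b H1 H2). Qed.
Lemma d_mult (f g : R -> R) x a b : is_derive f x a -> is_derive g x b -> is_derive (fun t => f t * g t) x (a * g x + f x * b).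
Proof. intros H1 H2. exact (is_derive_mult f g x a b H1 H2 Rmult_comm). Qed.
Lemma d_inv (f : R -> R) x a : is_derive f x a -> f x <> 0 -> is_derive (fun t => / f t) x (- a / f x ^ 2).
Proof. intros H1 H2. exact (is_derive_inv f x a H1 H2). Qed.
Lemma d_id x : is_derive (fun t : R => t) x 1.
Proof. exact (is_derive_id x). Qed.
Lemma d_const (c : R) x : is_derive (fun _ : R => c) x 0.
Proof. exact (is_derive_const c x). Qed.
Lemma d_scal (f : R -> R) x k a : is_derive f x a -> is_derive (fun t => k * f t) x (k * a).
Proof. apply is_derive_scal. Qed.
Lemma d_ln (f : R -> R) x a : is_derive f x a -> 0 < f x -> is_derive (fun t => ln (f t)) x (a / f x).
Proof. intros H1 H2. eapply is_derive_eq. apply (is_derive_comp ln f x). apply is_derive_ln; auto. apply H1.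
  unfold scal; simpl; unfold mult; simpl. unfold Rdiv. ring. Qed.
Lemma d_exp (f : R -> R) x a : is_derive f x a -> is_derive (fun t => exp (f t)) x (a * exp (f x)).
Proof. intros H1. eapply is_derive_eq. apply (is_derive_comp exp f x). apply is_derive_exp. apply H1.
  unfold scal; simpl; unfold mult; simpl. ring. Qed.

Lemma decr_limit (psi psi' L : R -> R) m1 lam0 :
  0 < lam0 -> (forall c, 0 < c -> is_derive psi c (psi' c)) -> (forall c, 0 < c <= lam0 -> psi' c <= 0) ->
  L 0 = 0 -> is_derive L 0 m1 -> (forall d, 0 < d -> psi d <= L d / d) -> psi lam0 <= m1.
Proof.
  intros Hl Hd Hneg HL0 HL Hpsi.
  apply Rnot_lt_le; intro Hc.
  set (eta := psi lam0 - m1).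
  apply is_derive_Reals in HL.
  destruct (HL eta) as [del Hdel]. unfold eta; lra.
  set (d := Rmin (del / 2) (lam0 / 2)).
  assert (Hd0 : 0 < d) by (unfold d; apply Rmin_pos; [destruct del; simpl; lra|lra]).
  assert (Hdl : d < lam0) by (unfold d; pose proof (Rmin_r (del/2) (lam0/2)); lra).
  assert (Hdd : Rabs d < del) by (rewrite Rabs_pos_eq by lra; unfold d; pose proof (Rmin_l (del/2) (lam0/2)); destruct del; simpl in *; lra).
  specialize (Hdel d (Rgt_not_eq _ _ Hd0) Hdd). rewrite Rplus_0_l, HL0, Rminus_0_r in Hdel.
  apply Rabs_lt_between in Hdel.
  destruct (MVT_cor2 psi psi' d lam0 Hdl) as [c [Hmvt Hcr]].
  { intros c Hc'. apply is_derive_Reals. apply Hd. lra. }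
  assert (psi' c * (lam0 - d) <= 0) by (assert (psi' c <= 0) by (apply Hneg; lra); nra).
  pose proof (Hpsi d Hd0). unfold eta in *. lra.
Qed.

Lemma herbst1 (Z Zd : R -> R) (K Lam m1 : R) :
  (forall l, is_derive Z l (Zd l)) -> (forall l, 0 < Z l) -> Z 0 = 1 -> Zd 0 = m1 -> 0 <= K ->
  (forall l, 0 < l <= Lam -> l * Zd l - Z l * ln (Z l) <= K * l^2 * Z l) ->
  forall l, 0 <= l <= Lam -> ln (Z l) <= l * m1 + K * l^2.
Proof.
  intros HZ Hpos HZ0 HZd0 HK Hent l [Hl0 HlL].
  destruct (Req_dec l 0) as [->|Hne]. rewrite HZ0, ln_1. lra.
  assert (Hl : 0 < l) by lra.
  set (L := fun t => ln (Z t)).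
  assert (HLd : forall t, is_derive L t (Zd t / Z t)).
  { intros t. unfold L. apply d_ln; auto. }
  set (psi := fun t => L t * / t - K * t).
  set (psi' := fun t => (Zd t / Z t) * / t + L t * (- (/ t ^ 2)) - K).
  assert (H := decr_limit psi psi' L m1 l Hl).
  assert (psi l <= m1).
  { apply H.
    - intros c Hc. unfold psi, psi'. eapply is_derive_eq.
      { apply d_minus. { apply d_mult. { apply HLd. } { apply d_inv. { apply d_id. } { simpl; lra. } } }
        { apply d_scal, d_id. } }
      simpl. field. split; [lra|]. pose proof (Hpos c); lra.
    - intros c [Hc Hcl]. unfold psi', L. pose proof (Hpos c).
      pose proof (Hent c (conj Hc (Rle_trans _ _ _ Hcl HlL))).
      assert (E : Zd c / Z c * / c + ln (Z c) * - / c ^ 2 - K = (c * Zd c - Z c * ln (Z c) - K * c^2 * Z c) / (c^2 * Z c)) by (field; lra).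
      rewrite E. apply Rmult_le_0_r. lra. left; apply Rinv_0_lt_compat. apply Rmult_lt_0_compat; nra.
    - unfold L. rewrite HZ0. apply ln_1.
    - unfold L. eapply is_derive_eq. apply HLd. rewrite HZ0, HZd0. field.
    - intros d Hd. unfold psi. assert (0 <= K * d) by nra. unfold Rdiv. lra. }
  unfold psi, L in H0. assert (ln (Z l) * / l <= m1 + K * l) by lra.
  apply (Rmult_le_compat_r l) in H1; [|lra]. field_simplify in H1; [|lra]. lra.
Qed.

Lemma herbst2 (Z Zd : R -> R) (a Lam m1 : R) :
  (forall l, is_derive Z l (Zd l)) -> (forall l, 0 < Z l) -> Z 0 = 1 -> Zd 0 = m1 -> 0 <= a ->
  a * Lam < 1 -> (forall l, 0 <= l -> 1 <= Z l) ->
  (forall l, 0 < l <= Lam -> l * Zd l - Z l * ln (Z l) <= a * l^2 * Zd l) ->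
  forall l, 0 < l <= Lam -> ln (Z l) * (/ l - a) <= m1.
Proof.
  intros HZ Hpos HZ0 HZd0 Ha HaL HZ1 Hent l [Hl HlL].
  set (L := fun t => ln (Z t)).
  assert (HLd : forall t, is_derive L t (Zd t / Z t)).
  { intros t. unfold L. apply d_ln; auto. }
  set (psi := fun t => L t * (/ t - a)).
  set (psi' := fun t => (Zd t / Z t) * (/ t - a) + L t * (- (/ t ^ 2))).
  apply (decr_limit psi psi' L m1 l Hl).
  - intros c Hc. unfold psi, psi'. eapply is_derive_eq.
    { apply d_mult. { apply HLd. } { apply d_minus. { apply d_inv. { apply d_id. } { simpl; lra. } } { apply d_const. } } }
    simpl. field. split; [lra|]. pose proof (Hpos c); lra.
  - intros c [Hc Hcl]. unfold psi', L. pose proof (Hpos c).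
    pose proof (Hent c (conj Hc (Rle_trans _ _ _ Hcl HlL))).
    assert (E : Zd c / Z c * (/ c - a) + ln (Z c) * - / c ^ 2 = (c * Zd c - Z c * ln (Z c) - a * c^2 * Zd c) / (c^2 * Z c)) by (field; lra).
    rewrite E. apply Rmult_le_0_r. lra. left; apply Rinv_0_lt_compat. apply Rmult_lt_0_compat; nra.
  - unfold L. rewrite HZ0. apply ln_1.
  - unfold L. eapply is_derive_eq. apply HLd. rewrite HZ0, HZd0. field.
  - intros d Hd. unfold psi. assert (0 <= L d) by (unfold L; rewrite <- ln_1; apply ln_le; [lra|apply HZ1; lra]).
    assert (0 <= a * L d) by nra. unfold Rdiv. replace (L d * (/ d - a)) with (L d * / d - a * L d) by ring. lra.
Qed.

Lemma Ex_cons xp mu F : Ex (xp :: mu) F = snd xp * F (fst xp) + Ex mu F.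
Proof. reflexivity. Qed.

Lemma Z_deriv mu (v : (nat -> R) -> R) l :
  is_derive (fun t => Ex mu (fun x => exp (t * v x))) l (Ex mu (fun x => v x * exp (l * v x))).
Proof.
  induction mu as [|xp mu IH].
  - apply (is_derive_ext (fun _ => 0)). intros; reflexivity. apply d_const.
  - apply (is_derive_ext (fun t => snd xp * exp (t * v (fst xp)) + Ex mu (fun x => exp (t * v x)))).
    { intros t. reflexivity. }
    replace (Ex (xp :: mu) (fun x => v x * exp (l * v x))) with
      (snd xp * (v (fst xp) * exp (l * v (fst xp))) + Ex mu (fun x => v x * exp (l * v x))) by reflexivity.
    apply d_plus; auto.
    apply d_scal.
    eapply is_derive_eq. apply (d_exp (fun t => t * v (fst xp))).
    apply (is_derive_ext (fun t => v (fst xp) * t)). intros; apply Rmult_comm. apply (d_scal (fun t => t)). apply d_id. ring.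
Qed.

Lemma Ent_exp mu (v : (nat -> R) -> R) l :
  Ent mu (fun x => exp (l * v x)) =
  l * Ex mu (fun x => v x * exp (l * v x)) - Ex mu (fun x => exp (l * v x)) * ln (Ex mu (fun x => exp (l * v x))).
Proof. unfold Ent. f_equal. rewrite <- Ex_scal. apply Ex_ext. intros. rewrite ln_exp. ring. Qed.

Lemma Ent_exp' mu (u : (nat -> R) -> R) :
  Ent mu (fun x => exp (u x)) =
  Ex mu (fun x => u x * exp (u x)) - Ex mu (fun x => exp (u x)) * ln (Ex mu (fun x => exp (u x))).
Proof. unfold Ent. f_equal. apply Ex_ext. intros. rewrite ln_exp. ring. Qed.

Lemma duality mu (u g : (nat -> R) -> R) : is_prob mu ->
  Ex mu (fun x => g x * exp (u x)) <=
  Ent mu (fun x => exp (u x)) + Ex mu (fun x => exp (u x)) * ln (Ex mu (fun x => exp (g x))).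
Proof.
  intros Hp. rewrite Ent_exp'.
  set (Z := Ex mu (fun x => exp (u x))). set (S := Ex mu (fun x => exp (g x))).
  assert (HZ : 0 < Z) by (apply Ex_pos; auto; intros; apply exp_pos).
  assert (HS : 0 < S) by (apply Ex_pos; auto; intros; apply exp_pos).
  assert (H : Ex mu (fun x => (g x - u x + ln Z - ln S) * exp (u x)) <= Ex mu (fun x => exp (g x) * (Z / S) - exp (u x))).
  { apply Ex_le. apply prob_wnn; auto. intros xp _.
    set (w := g (fst xp) - u (fst xp) + ln Z - ln S).
    pose proof (exp_ge_1plus w). pose proof (exp_pos (u (fst xp))).
    assert (E : exp w * exp (u (fst xp)) = exp (g (fst xp)) * (Z / S)).
    { rewrite <- exp_plus. unfold w. replace (g (fst xp) - u (fst xp) + ln Z - ln S + u (fst xp)) with (g (fst xp) + (ln Z - ln S)) by ring.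
      rewrite exp_plus. unfold Rminus. rewrite exp_plus, exp_ln, exp_Ropp, exp_ln; auto. }
    rewrite <- E. assert (0 <= exp (u (fst xp)) * (exp w - (1 + w))) by (apply Rmult_le_pos; lra).
    lra. }
  rewrite Ex_minus in H. rewrite (Ex_ext mu (fun x => exp (g x) * (Z / S)) (fun x => (Z / S) * exp (g x))) in H by (intros; ring).
  rewrite Ex_scal in H. fold S in H. replace (Z / S * S - Z) with 0 in H by (field; lra).
  rewrite (Ex_ext mu (fun x => (g x - u x + ln Z - ln S) * exp (u x))
     (fun x => (g x * exp (u x) - u x * exp (u x)) + (ln Z - ln S) * exp (u x))) in H by (intros; ring).
  rewrite Ex_plus, Ex_minus, Ex_scal in H. fold Z in H.
  replace ((ln Z - ln S) * Z) with (Z * ln Z - Z * ln S) in H by ring. replace (Z / S * S - Z) with 0 in H by (field; lra). lra.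
Qed.

Lemma chernoff mu (F : (nat -> R) -> R) t l : wnn mu -> 0 <= l ->
  Pr mu (fun x => F x >= t) <= Ex mu (fun x => exp (l * (F x - t))).
Proof.
  intros Hw Hl. unfold Pr. fold (lsum mu (fun xp => if excluded_middle_informative (F (fst xp) >= t) then snd xp else 0)).
  rewrite Ex_lsum. apply lsum_le. intros xp Hxp. pose proof (Hw xp Hxp).
  destruct (excluded_middle_informative (F (fst xp) >= t)).
  - assert (1 <= exp (l * (F (fst xp) - t))).
    { rewrite <- exp_0. destruct (Req_dec (l * (F (fst xp) - t)) 0) as [->|Hn]; [lra|].
      left; apply exp_increasing. assert (0 <= l * (F (fst xp) - t)) by (apply Rmult_le_pos; lra). lra. }
    rewrite <- (Rmult_1_r (snd xp)) at 1. apply Rmult_le_compat_l; auto.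
  - pose proof (exp_pos (l * (F (fst xp) - t))). apply Rmult_le_pos; lra.
Qed.

Lemma exp_quad y : 0 <= y -> 1 + y + y^2/2 <= exp y.
Proof.
  intros Hy. destruct (Req_dec y 0) as [->|Hne]. rewrite exp_0; lra.
  set (phi := fun z => exp z - 1 - z - z^2/2).
  destruct (MVT_cor2 phi (fun z => exp z - 1 - z) 0 y) as [c [Hm Hc]]. lra.
  { intros c Hc. apply is_derive_Reals. unfold phi. eapply is_derive_eq.
    apply d_minus. apply d_minus. apply d_minus. apply (d_exp (fun z => z)). apply d_id. apply d_const. apply d_id.
    apply (is_derive_ext (fun z => / 2 * (z * z))). { intros z. unfold Rdiv, pow. rewrite Rmult_1_r. apply Rmult_comm. }
    apply d_scal. apply d_mult; apply d_id. cbv beta. assert (Hq : forall c0 : R, 1 * exp c0 - 0 - 1 - / 2 * (1 * c0 + c0 * 1) = exp c0 - 1 - c0) by (intros; field). apply Hq. }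
  unfold phi in Hm. rewrite exp_0 in Hm. pose proof (exp_ge_1plus c).
  assert (0 <= (exp c - 1 - c) * (y - 0)) by (apply Rmult_le_pos; lra). lra.
Qed.

Lemma Pr_le_1 mu P : is_prob mu -> Pr mu P <= 1.
Proof.
  intros Hp. unfold Pr. fold (lsum mu (fun xp => if excluded_middle_informative (P (fst xp)) then snd xp else 0)).
  rewrite <- (prob_sum mu Hp). apply lsum_le. intros xp Hxp. pose proof (prob_wnn mu Hp xp Hxp).
  destruct (excluded_middle_informative (P (fst xp))); lra.
Qed.

Lemma trivial_bound P E : P <= 1 -> E <= 1/2 -> P <= 2 * exp (- E).
Proof. intros HP HE. pose proof (exp_ge_1plus (- E)). lra. Qed.

Lemma le_div (x y z : R) : 0 < z -> x * z <= y -> x <= y / z.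
Proof. intros Hz H. apply (Rmult_le_reg_r z); auto. unfold Rdiv. rewrite Rmult_assoc, Rinv_l, Rmult_1_r; lra. Qed.
Lemma div_le (x y z : R) : 0 < z -> x <= y * z -> x / z <= y.
Proof. intros Hz H. apply (Rmult_le_reg_r z); auto. unfold Rdiv. rewrite Rmult_assoc, Rinv_l, Rmult_1_r; lra. Qed.

Lemma final_arith (c T1 T2 K t P : R) : 0 < c -> 0 < T1 -> 0 < T2 -> 0 < t -> 0 <= K ->
  K <= 4 * c * T1^2 + 8 * c^2 * T2^2 -> P <= 1 ->
  (forall l, 0 <= l <= / (2 * c * T2) -> P <= exp (K * l^2 - l * t)) ->
  P <= 2 * exp (- (1 / (60 * c)) * Rmin (t^2 / T1^2) (t / T2)).
Proof.
  intros Hc HT1 HT2 Ht HK0 HK HP Hl.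
  set (E := 1 / (60 * c) * Rmin (t ^ 2 / T1 ^ 2) (t / T2)).
  replace (- (1 / (60 * c)) * Rmin (t ^ 2 / T1 ^ 2) (t / T2)) with (- E) by (unfold E; ring).
  assert (HE1 : E <= t^2 / (60 * c * T1^2)).
  { unfold E. replace (t ^ 2 / (60 * c * T1 ^ 2)) with (1 / (60 * c) * (t^2 / T1^2)) by (field; split; lra).
    apply Rmult_le_compat_l. left; apply Rdiv_lt_0_compat; lra. apply Rmin_l. }
  assert (HE2 : E <= t / (60 * c * T2)).
  { unfold E. replace (t / (60 * c * T2)) with (1 / (60 * c) * (t / T2)) by (field; split; lra).
    apply Rmult_le_compat_l. left; apply Rdiv_lt_0_compat; lra. apply Rmin_r. }
  set (Lam := / (2 * c * T2)).
  assert (HLam : 0 < Lam) by (unfold Lam; apply Rinv_0_lt_compat; nra).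
  assert (HLamv : Lam * (2 * c * T2) = 1) by (unfold Lam; field; split; lra).
  assert (Hfin : forall x, x <= - E -> P <= exp x -> P <= 2 * exp (- E)).
  { intros x Hx HPx. assert (exp x <= exp (- E)) by (destruct (Req_dec x (-E)) as [->|]; [lra|left; apply exp_increasing; lra]).
    pose proof (exp_pos (-E)). lra. }
  destruct (Rle_or_lt (2 * K * Lam) t) as [Hbig|Hsmall].
  - apply (Hfin (K * Lam^2 - Lam * t)); [|apply Hl; split; [lra|unfold Lam; lra]].
    assert (K * Lam ^ 2 <= Lam * t / 2).
    { replace (K * Lam^2) with (Lam * (K * Lam)) by ring. unfold Rdiv. rewrite Rmult_assoc.
      apply Rmult_le_compat_l; lra. }
    assert (Lam * t / 2 = t / (4 * c * T2)) by (unfold Lam; field; split; lra).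
    assert (t / (60 * c * T2) <= t / (4 * c * T2)).
    { unfold Rdiv. apply Rmult_le_compat_l. lra. apply Rinv_le_contravar; nra. }
    lra.
  - assert (HKp : 0 < K) by (destruct (Req_dec K 0) as [->|]; [lra|lra]).
    set (l := t / (2 * K)).
    assert (Hl0 : 0 <= l <= Lam).
    { unfold l. split. left; apply Rdiv_lt_0_compat; lra.
      apply div_le. lra. lra. }
    assert (Hx : K * l ^ 2 - l * t = - (t^2 / (4 * K))) by (unfold l; field; lra).
    destruct (Rle_or_lt (8 * c^2 * T2^2) (4 * c * T1^2)) as [Ha|Hb].
    + apply (Hfin (K * l ^ 2 - l * t)); [|apply Hl; auto].
      rewrite Hx. assert (K <= 8 * c * T1 ^ 2) by lra.
      assert (t ^ 2 / (60 * c * T1 ^ 2) <= t ^ 2 / (4 * K)).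
      { unfold Rdiv. apply Rmult_le_compat_l. nra. apply Rinv_le_contravar. lra. nra. }
      lra.
    + destruct (Rle_or_lt (16 / 15 * c * T2) t) as [Ht2|Ht2].
      * apply (Hfin (K * l ^ 2 - l * t)); [|apply Hl; auto].
        rewrite Hx. assert (K <= 16 * c^2 * T2 ^ 2) by lra.
        assert (t ^ 2 / (64 * c^2 * T2 ^ 2) <= t ^ 2 / (4 * K)).
        { unfold Rdiv. apply Rmult_le_compat_l. nra. apply Rinv_le_contravar. lra. nra. }
        assert (t / (60 * c * T2) <= t ^ 2 / (64 * c^2 * T2 ^ 2)).
        { replace (t ^ 2 / (64 * c^2 * T2 ^ 2)) with ((t / (60 * c * T2)) * (60 * t / (64 * c * T2))) by (field; split; lra).
          assert (1 <= 60 * t / (64 * c * T2)).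
          { apply le_div. nra. nra. }
          assert (0 <= t / (60 * c * T2)) by (left; apply Rdiv_lt_0_compat; nra).
          nra. }
        lra.
      * apply trivial_bound; auto.
        assert (t / (60 * c * T2) <= 1 / 2).
        { apply div_le. nra. nra. }
        lra.
Qed.

Lemma ent_absorb E th X : 0 <= th <= 1/2 -> 0 <= X -> E <= th * (E + X) -> E <= 2 * th * X.
Proof.
  intros Hth HX H. destruct (Rle_or_lt E 0) as [HE|HE].
  - assert (0 <= th * X) by (apply Rmult_le_pos; lra). lra.
  - assert (th * E <= E / 2) by nra. nra.
Qed.

Lemma Ex_exp_zero mu (v : (nat -> R) -> R) : is_prob mu -> Ex mu (fun x => exp (0 * v x)) = 1.
Proof. intros Hp. rewrite (Ex_ext mu _ (fun _ => 1)). apply Ex_const; auto. intros; rewrite Rmult_0_l, exp_0; auto. Qed.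
Lemma Ex_expd_zero mu (v : (nat -> R) -> R) : Ex mu (fun x => v x * exp (0 * v x)) = Ex mu v.
Proof. apply Ex_ext. intros; rewrite Rmult_0_l, exp_0; ring. Qed.

Theorem corollary2p2 (n : nat) (a b sigma : R) (mu : law) (V : Banach)
  (T : bfamily V -> Prop) :
  a < b ->
  is_prob mu ->
  (forall xp, In xp mu -> forall i, (i < n)%nat -> a <= fst xp i <= b) ->
  dLSI mu n (sigma ^ 2) ->
  fcompact n T ->
  (exists t, T t) ->
  forall t : R, 0 <= t ->
    Pr mu (fun x => fT n T x - Ex mu (fT n T) >= t)
      <= 2 * exp (- (1 / (60 * (b - a) ^ 2 * sigma ^ 2))
                   * Rmin (t ^ 2 / (T1 mu n T) ^ 2) (t / T2 n T)).
Proof.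
  intros Hab Hp Hs HL Hc Hne t Ht.
  destruct (compact_bounded n T Hc Hne) as [Kb [HK0 HK]].
  assert (HKb : Kbound n T Kb) by exact HK.
  assert (Hw := prob_wnn mu Hp).
  assert (HPr1 := Pr_le_1 mu (fun x => fT n T x - Ex mu (fT n T) >= t) Hp).
  set (P := Pr mu (fun x => fT n T x - Ex mu (fT n T) >= t)) in *.
  assert (HT1nn : 0 <= T1 mu n T) by (rewrite T1_eq; apply Ex_nonneg; auto; intros; apply hfun_nonneg; auto).
  assert (HT2nn : 0 <= T2 n T) by (apply T2_nonneg; auto).
  set (T1v := T1 mu n T) in *. set (T2v := T2 n T) in *.
  replace (- (1 / (60 * (b - a) ^ 2 * sigma ^ 2)) * Rmin (t ^ 2 / T1v ^ 2) (t / T2v))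
    with (- ((1 / (60 * (b - a) ^ 2 * sigma ^ 2)) * Rmin (t ^ 2 / T1v ^ 2) (t / T2v))) by (unfold Rdiv; ring).
  assert (Hdiv0 : forall x, x / 0 = 0) by (intros; unfold Rdiv; rewrite Rinv_0; ring).
  assert (Hdivnn : forall x y, 0 <= x -> 0 <= y -> 0 <= x / y).
  { intros x y Hx Hy. destruct (Req_dec y 0) as [->|Hy0]. rewrite Hdiv0; lra. apply Rdiv_le_0_compat; lra. }
  assert (Hm0 : 0 <= Rmin (t ^ 2 / T1v ^ 2) (t / T2v)).
  { apply Rmin_glb; apply Hdivnn; try apply pow2_ge_0; auto. }
  destruct (Req_dec sigma 0) as [Hsig|Hsig].
  { apply trivial_bound; auto. rewrite Hsig. replace (60 * (b - a) ^ 2 * 0 ^ 2) with 0 by ring. rewrite Hdiv0. lra. }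
  assert (Hm00 : T1v = 0 \/ T2v = 0 \/ t = 0 -> Rmin (t ^ 2 / T1v ^ 2) (t / T2v) = 0).
  { intros [H|[H|H]]; rewrite H.
    - replace (0 ^ 2) with 0 by ring. rewrite Hdiv0. apply Rmin_left. apply Hdivnn; auto.
    - rewrite Hdiv0. apply Rmin_right. apply Hdivnn; auto; apply pow2_ge_0.
    - replace (0 ^ 2) with 0 by ring. unfold Rdiv. rewrite !Rmult_0_l. apply Rmin_left; lra. }
  destruct (classic (T1v = 0 \/ T2v = 0 \/ t = 0)) as [Hdeg|Hndeg].
  { apply trivial_bound; auto. rewrite Hm00 by auto. lra. }
  assert (HT1 : 0 < T1v) by (destruct (Req_dec T1v 0); [tauto|lra]).
  assert (HT2 : 0 < T2v) by (destruct (Req_dec T2v 0); [tauto|lra]).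
  assert (Htp : 0 < t) by (destruct (Req_dec t 0); [tauto|lra]).
  clear Hndeg Hm00.
  set (s2 := sigma ^ 2) in *.
  assert (Hs2 : 0 < s2) by (unfold s2; simpl; rewrite Rmult_1_r; assert (sigma * sigma > 0) by (apply Rsqr_pos_lt; auto); lra).
  set (c := s2 * (b - a) ^ 2).
  assert (Hcp : 0 < c) by (unfold c; apply Rmult_lt_0_compat; auto; simpl; nra).
  replace (60 * (b - a) ^ 2 * s2) with (60 * c) by (unfold c; ring).
  set (s := c * T2v ^ 2).
  assert (Hsp : 0 < s) by (unfold s; apply Rmult_lt_0_compat; auto; simpl; nra).
  set (h := hfun n T). set (f := fT n T).
  set (Zh := fun l => Ex mu (fun x => exp (l * h x))).
  set (Zhd := fun l => Ex mu (fun x => h x * exp (l * h x))).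
  assert (StepH : forall l, 0 <= l -> ln (Zh l) <= l * T1v + (s / 2) * l ^ 2).
  { intros l Hl. apply (herbst1 Zh Zhd (s / 2) l T1v).
    - intros l'. apply Z_deriv.
    - intros l'. apply Ex_pos; auto. intros; apply exp_pos.
    - apply Ex_exp_zero; auto.
    - unfold Zhd. rewrite Ex_expd_zero. reflexivity.
    - lra.
    - intros l' [Hl'1 Hl'2]. unfold Zh, Zhd. rewrite <- Ent_exp.
      eapply Rle_trans. apply (entB mu n a b s2 T Kb l'); auto; lra.
      rewrite (Ex_ext mu _ (fun x => (l' ^ 2 * (b - a) ^ 2 * T2v ^ 2) * exp (l' * h x))) by auto.
      rewrite Ex_scal. unfold s, c. right; unfold Rdiv; ring.
    - lra. }
  assert (StepE : Ex mu (fun x => h x ^ 2) <= 2 * T1v ^ 2 + 4 * s).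
  { set (l0 := sqrt (2 / s)).
    assert (Hl0sq : l0 ^ 2 = 2 / s) by (unfold l0; simpl; rewrite Rmult_1_r; apply sqrt_sqrt; left; apply Rdiv_lt_0_compat; lra).
    assert (Hl0 : 0 < l0) by (unfold l0; apply sqrt_lt_R0; apply Rdiv_lt_0_compat; lra).
    assert (Hpt : forall x, h x ^ 2 <= 2 * T1v ^ 2 + 4 / l0 ^ 2 * (exp (l0 * (h x - T1v)) - 1 - l0 * (h x - T1v))).
    { intros x. pose proof (hfun_nonneg n T x Hne) as Hh. fold h in Hh.
      set (y := l0 * (h x - T1v)).
      assert (Hl02 : 0 < l0 ^ 2) by (simpl; nra).
      destruct (Rle_or_lt (h x) T1v) as [Hle|Hgt].
      - pose proof (exp_ge_1plus y). assert (0 <= 4 / l0 ^ 2 * (exp y - 1 - y)) by (apply Rmult_le_pos; [left; apply Rdiv_lt_0_compat; lra|lra]).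
        assert (h x ^ 2 <= T1v ^ 2) by (simpl; nra). pose proof (pow2_ge_0 T1v). lra.
      - assert (Hy : 0 <= y) by (unfold y; apply Rmult_le_pos; lra).
        pose proof (exp_quad y Hy).
        assert (4 / l0 ^ 2 * (y ^ 2 / 2) = 2 * (h x - T1v) ^ 2) by (unfold y; field; lra).
        assert (4 / l0 ^ 2 * (y ^ 2 / 2) <= 4 / l0 ^ 2 * (exp y - 1 - y)) by (apply Rmult_le_compat_l; [left; apply Rdiv_lt_0_compat; lra|lra]).
        assert (h x ^ 2 <= 2 * T1v ^ 2 + 2 * (h x - T1v) ^ 2) by (pose proof (pow2_ge_0 (h x - 2 * T1v)); simpl; nra).
        lra. }
    assert (HEx : Ex mu (fun x => h x ^ 2) <= 2 * T1v ^ 2 + 4 / l0 ^ 2 * (Ex mu (fun x => exp (l0 * (h x - T1v))) - 1 - l0 * (Ex mu h - T1v))).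
    { eapply Rle_trans. apply (Ex_le mu _ (fun x => 2 * T1v ^ 2 + 4 / l0 ^ 2 * (exp (l0 * (h x - T1v)) - 1 - l0 * (h x - T1v)))); auto.

      right. rewrite Ex_plus, Ex_const by auto. rewrite Ex_scal. f_equal. f_equal.
      rewrite !Ex_minus, Ex_const by auto. rewrite Ex_scal, Ex_minus, Ex_const by auto. ring. }
    replace (Ex mu h) with T1v in HEx by (unfold T1v; rewrite T1_eq; reflexivity).
    assert (HZ : Ex mu (fun x => exp (l0 * (h x - T1v))) = exp (- (l0 * T1v)) * Zh l0).
    { unfold Zh. rewrite <- Ex_scal. apply Ex_ext. intros. rewrite <- exp_plus. f_equal. ring. }
    pose proof (StepH l0 (Rlt_le _ _ Hl0)).
    assert (Zh l0 <= exp (l0 * T1v + s / 2 * l0 ^ 2)).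
    { rewrite <- (exp_ln (Zh l0)). destruct (Req_dec (ln (Zh l0)) (l0 * T1v + s / 2 * l0 ^ 2)) as [->|]; [lra|].
      left; apply exp_increasing; lra. apply Ex_pos; auto; intros; apply exp_pos. }
    assert (Ex mu (fun x => exp (l0 * (h x - T1v))) <= exp 1).
    { rewrite HZ. replace 1 with (- (l0 * T1v) + (l0 * T1v + s / 2 * l0 ^ 2)) by (rewrite Hl0sq; field; lra).
      rewrite exp_plus. apply Rmult_le_compat_l; auto. left; apply exp_pos. }
    pose proof exp_le_3.
    assert (4 / l0 ^ 2 = 2 * s) by (rewrite Hl0sq; field; lra).
    rewrite H3 in HEx. replace (l0 * (T1v - T1v)) with 0 in HEx by ring. nra. }
  set (Eh2 := Ex mu (fun x => h x ^ 2)) in *.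
  assert (HEh2 : 0 <= Eh2) by (apply Ex_nonneg; auto; intros; apply pow2_ge_0).
  set (Zq := fun l => Ex mu (fun x => exp (l * (h x ^ 2)))).
  set (Zqd := fun l => Ex mu (fun x => h x ^ 2 * exp (l * (h x ^ 2)))).
  set (m0 := / (4 * s)).
  assert (Hm0p : 0 < m0) by (unfold m0; apply Rinv_0_lt_compat; lra).
  assert (HZq1 : forall l, 0 <= l -> 1 <= Zq l).
  { intros l Hl. unfold Zq. rewrite <- (Ex_const mu 1 Hp). apply Ex_le; auto. intros xp _.
    rewrite <- exp_0. destruct (Req_dec (l * h (fst xp) ^ 2) 0) as [E0|E0]. rewrite E0; lra.
    left; apply exp_increasing. assert (0 <= l * h (fst xp) ^ 2) by (apply Rmult_le_pos; auto; apply pow2_ge_0). lra. }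
  assert (StepQ : ln (Zq m0) <= Eh2 / (2 * s)).
  { assert (H := herbst2 Zq Zqd (2 * s) m0 Eh2).
    assert (Hq : ln (Zq m0) * (/ m0 - 2 * s) <= Eh2).
    { apply H.
      - intros l. exact (Z_deriv mu (fun x => h x ^ 2) l).
      - intros l. apply Ex_pos; auto. intros; apply exp_pos.
      - exact (Ex_exp_zero mu (fun x => h x ^ 2) Hp).
      - exact (Ex_expd_zero mu (fun x => h x ^ 2)).
      - lra.
      - unfold m0. field_simplify; lra.
      - exact HZq1.
      - intros l [Hl1 Hl2].
        replace (l * Zqd l - Zq l * ln (Zq l)) with (Ent mu (fun x => exp (l * (h x ^ 2))))
          by (unfold Zq, Zqd; apply (Ent_exp mu (fun x => h x ^ 2) l)).
        eapply Rle_trans. apply (entC mu n a b s2 T Kb l); auto; lra.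
        rewrite (Ex_ext mu _ (fun x => (4 * l ^ 2 * (b - a) ^ 2 * T2v ^ 2) * (h x ^ 2 * exp (l * h x ^ 2)))) by (intros; cbv beta; unfold h, T2v in *; ring).
        rewrite Ex_scal. unfold Zqd, s, c. right. unfold Rdiv. field.
      - split; [lra|lra]. }
    replace (/ m0 - 2 * s) with (2 * s) in Hq by (unfold m0; field; lra).
    apply le_div. lra. lra. }
  assert (HLq : 0 <= ln (Zq m0)) by (rewrite <- ln_1; apply ln_le; [lra|apply HZq1; lra]).
  set (Ef := Ex mu f).
  set (Zf := fun l => Ex mu (fun x => exp (l * f x))).
  set (Zfd := fun l => Ex mu (fun x => f x * exp (l * f x))).
  set (Lam := / (2 * c * T2v)).
  assert (HLam : 0 < Lam) by (unfold Lam; apply Rinv_0_lt_compat; nra).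
  assert (StepF : forall l, 0 < l <= Lam -> l * Zfd l - Zf l * ln (Zf l) <= (2 * c * Eh2) * l ^ 2 * Zf l).
  { intros l [Hl1 Hl2].
    replace (l * Zfd l - Zf l * ln (Zf l)) with (Ent mu (fun x => exp (l * f x))) by (unfold Zf, Zfd; apply Ent_exp).
    set (En := Ent mu (fun x => exp (l * f x))).
    set (A := Ex mu (fun x => h x ^ 2 * exp (l * f x))).
    assert (HZf : 0 < Zf l) by (apply Ex_pos; auto; intros; apply exp_pos).
    assert (HA : En <= c * l ^ 2 / 2 * A).
    { eapply Rle_trans. apply (entA mu n a b s2 T Kb l); auto; lra.
      rewrite (Ex_ext mu _ (fun x => (l ^ 2 * (b - a) ^ 2) * (h x ^ 2 * exp (l * f x)))) by (intros; cbv beta; unfold h, f, T2v in *; ring).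
      rewrite Ex_scal. unfold c, A. right. unfold Rdiv. ring. }
    assert (Hdual : m0 * A <= En + Zf l * ln (Zq m0)).
    { pose proof (duality mu (fun x => l * f x) (fun x => m0 * h x ^ 2) Hp) as Hd.
      rewrite (Ex_ext mu _ (fun x => m0 * (h x ^ 2 * exp (l * f x)))) in Hd by (intros; cbv beta; unfold h, f, T2v in *; ring).
      rewrite Ex_scal in Hd. exact Hd. }
    set (th := 2 * c * s * l ^ 2).
    assert (Hth : 0 <= th <= 1 / 2).
    { split. unfold th. apply Rmult_le_pos. nra. apply pow2_ge_0.
      assert (Hl : l * (2 * c * T2v) <= 1).
      { apply (Rmult_le_compat_r (2 * c * T2v)) in Hl2; [|nra]. unfold Lam in Hl2. rewrite Rinv_l in Hl2 by nra. lra. }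
      assert (0 <= l * (2 * c * T2v)) by (apply Rmult_le_pos; nra).
      assert ((l * (2 * c * T2v)) ^ 2 <= 1) by (simpl; nra).
      unfold th, s. replace (2 * c * (c * T2v ^ 2) * l ^ 2) with ((l * (2 * c * T2v)) ^ 2 / 2) by field. lra. }
    assert (HA2 : A <= 4 * s * (En + Zf l * ln (Zq m0))).
    { unfold m0 in Hdual. apply (Rmult_le_compat_l (4 * s)) in Hdual; [|lra].
      rewrite <- Rmult_assoc, Rinv_r, Rmult_1_l in Hdual by lra. exact Hdual. }
    assert (HE : En <= th * (En + Zf l * ln (Zq m0))).
    { eapply Rle_trans. exact HA. replace th with (c * l ^ 2 / 2 * (4 * s)) by (unfold th; field).
      rewrite Rmult_assoc. apply Rmult_le_compat_l. apply Rmult_le_pos; [|lra]. apply Rmult_le_pos; [lra|apply pow2_ge_0]. exact HA2. }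
    assert (HX : 0 <= Zf l * ln (Zq m0)) by (apply Rmult_le_pos; lra).
    pose proof (ent_absorb En th (Zf l * ln (Zq m0)) Hth HX HE) as H1.
    assert (Zf l * ln (Zq m0) <= Zf l * (Eh2 / (2 * s))) by (apply Rmult_le_compat_l; lra).
    assert (H2 : 2 * th * (Zf l * ln (Zq m0)) <= 2 * th * (Zf l * (Eh2 / (2 * s)))) by (apply Rmult_le_compat_l; lra).
    replace (2 * th * (Zf l * (Eh2 / (2 * s)))) with (2 * c * Eh2 * l ^ 2 * Zf l) in H2 by (unfold th, s; field; lra).
    lra. }
  assert (StepG : forall l, 0 <= l <= Lam -> ln (Zf l) <= l * Ef + (2 * c * Eh2) * l ^ 2).
  { apply (herbst1 Zf Zfd (2 * c * Eh2) Lam Ef).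
    - intros l. apply Z_deriv.
    - intros l. apply Ex_pos; auto. intros; apply exp_pos.
    - apply Ex_exp_zero; auto.
    - unfold Zfd. rewrite Ex_expd_zero. reflexivity.
    - apply Rmult_le_pos; lra.
    - exact StepF. }
  replace (- (1 / (60 * c) * Rmin (t ^ 2 / T1v ^ 2) (t / T2v))) with (- (1 / (60 * c)) * Rmin (t ^ 2 / T1v ^ 2) (t / T2v)) by (unfold Rdiv; ring).
  apply (final_arith c T1v T2v (2 * c * Eh2) t P); auto.
  - apply Rmult_le_pos; lra.
  - unfold s in StepE. assert (2 * c * Eh2 <= 2 * c * (2 * T1v ^ 2 + 4 * (c * T2v ^ 2))) by (apply Rmult_le_compat_l; lra).
    lra.
  - intros l Hl. fold Lam in Hl.
    eapply Rle_trans. apply (chernoff mu (fun x => fT n T x - Ex mu (fT n T)) t l); auto. lra.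
    rewrite (Ex_ext mu _ (fun x => exp (- (l * (Ef + t))) * exp (l * f x))).
    2:{ intros xp _. rewrite <- exp_plus. f_equal. unfold Ef, f. ring. }
    rewrite Ex_scal. fold (Zf l).
    assert (HZf : 0 < Zf l) by (apply Ex_pos; auto; intros; apply exp_pos).
    assert (Zf l <= exp (l * Ef + 2 * c * Eh2 * l ^ 2)).
    { rewrite <- (exp_ln (Zf l)) by auto. pose proof (StepG l Hl).
      destruct (Req_dec (ln (Zf l)) (l * Ef + 2 * c * Eh2 * l ^ 2)) as [->|]; [lra|]. left; apply exp_increasing; lra. }
    replace (2 * c * Eh2 * l ^ 2 - l * t) with (- (l * (Ef + t)) + (l * Ef + 2 * c * Eh2 * l ^ 2)) by ring.
    rewrite exp_plus. apply Rmult_le_compat_l; auto. left; apply exp_pos.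
Qed.
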